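(* For every $\varepsilon\in(0,R)$, the approximate solution $u_\varepsilon$ satisfies $$u^*\ge u_\varepsilon\ge u^*-v\qquad\text{in }\Omega_\varepsilon\times(0,\infty).$$
   Context: Standing setting: $n\ge2$, $0<R<\sqrt{\tfrac38(3n-5)(2n-3)^3}$; $B_\rho=\{x\in\mathbb R^n:|x|<\rho\}$; radial functions written in $r=|x|$, subscript $r$ = radial derivative. $\alpha:=\sqrt[3]{9n-15}$, $u^*(r):=-\alpha r^{1/3}$, $\nu:=\tfrac16\sqrt{36n^2-96n+61}$, $J_\nu$ the Bessel function of the first kind of order $\nu$, $x_0,x_1$ the first positive roots of $J_\nu$, $J_\nu'$. $u_0$ satisfies: (C1) $u_0\in C^2(\overline{B_R}\setminus\{0\})$; (C2) radially symmetric; (C3) $u^*\ge u_0$; (C4) $\limsup_{r\searrow0}|r^{\frac32-n-\nu}(u^*(r)-u_0(r))|<\infty$; (C5) $u_0(R)=u^*(R)$; (C6) there is $C>0$ with $0\ge u_{0r}(r)\ge -Cr^{-2/3}$ on $(0,R)$. Fix $\lambda>0$ with $\lambda R<x_1$ and $C>0$ such that $v(r,t):=Ce^{-\lambda^2t}r^{n-\frac32}J_\nu(\lambda r)$ satisfies $u_0\ge u^*-v(\cdot,0)$ in $B_R$. For $\varepsilon\in(0,R)$ let $\Omega_\varepsilon:=B_R\setminus\overline{B_\varepsilon}$ and let $u_{0\varepsilon}\in C^2(\overline{\Omega_\varepsilon})$ be radially symmetric with: $u_{0\varepsilon}(\varepsilon)=u^*(\varepsilon)-v(\varepsilon,0)$;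 $u_{0r}\le u_{0\varepsilon r}\le0$; $u^*\ge u_{0\varepsilon}\ge u^*-v(\cdot,0)$; and $u_{0\varepsilon}=u_0$ on $\{r\in(\varepsilon,R]:u_0(r)<u^*(\varepsilon)-v(\varepsilon,0)-\varepsilon\}$. Let $c_v:=-e^{\lambda^2t}v(\varepsilon,t)$ (independent of $t$) and choose $c^*_\varepsilon>1$ with $c^*_\varepsilon>\sup_{[\varepsilon,R]}|u^*_r|$, $c^*_\varepsilon>\sup_{[\varepsilon,R]}|(u^*-v(\cdot,0))_r|$, $c^*_\varepsilon>\sup_{[\varepsilon,R]}|u_{0\varepsilon r}|$, and $c_v+\frac{n-1}{\varepsilon}c^*_\varepsilon+u^*(\varepsilon)(c^*_\varepsilon)^3\le0$. Let $f_\varepsilon\in C_c^\infty(\mathbb R)$ with $f_\varepsilon(s)=s^3$ for $|s|\le c^*_\varepsilon$ and $f_\varepsilon\le0$ on $(-\infty,0)$. The approximate solution $u_\varepsilon$ is the unique radially symmetric solution, with $u_\varepsilon\in C^{\beta,\beta/2}(\overline{\Omega_\varepsilon}\times[0,\infty))\cap C^{2+\beta,1+\beta/2}(\Omega_\varepsilon\times(0,\infty))$ for some $\beta\in(0,1)$ and $\nabla u_\varepsilon\in L^\infty_{loc}(\overline{\Omega_\varepsilon}\times[0,\infty))$, of $u_{\varepsilon t}=\Delta u_\varepsilon+u_\varepsilon f_\varepsilon(u_{\varepsilon r})$ in $\Omega_\varepsilon\times(0,\infty)$, $u_\varepsilon(\varepsilon,t)=u^*(\varepsilon)-v(\varepsilon,t)$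 and $u_\varepsilon(R,t)=u^*(R)$ for $t>0$, $u_\varepsilon(\cdot,0)=u_{0\varepsilon}$ in $\overline{\Omega_\varepsilon}$. *)

(* Defs.v *)
From Stdlib Require Import Arith Reals Lra ClassicalEpsilon.
Open Scope R_scope.

(* x^a for x >= 0 with the convention 0^a = 0 (used only with a > 0 or x > 0). *)
Definition pw (x a : R) : R := if Rlt_dec 0 x then Rpower x a else 0.

(* limit of a real sequence (chosen classically; meaningful when it converges) *)
Definition lim_seq (u : nat -> R) : R :=
  epsilon (inhabits 0) (fun l => Un_cv u l).

Fixpoint rprod (z : R) (k : nat) : R :=
  match k with
  | O => z
  | S k' => rprod z k' * (z + INR (S k'))
  end.

(* Gamma function via Gauss' limit formula (for z > 0) *)
Definition Gamma (z : R) : R :=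
  lim_seq (fun k => INR (fact k) * Rpower (INR k) z / rprod z k).

Definition BesselJ (nu x : R) : R :=
  lim_seq (fun N => sum_f_R0
    (fun m => (-1) ^ m / (INR (fact m) * Gamma (INR m + nu + 1))
              * pw (x / 2) (2 * INR m + nu)) N).

Definition alpha (n : nat) : R := Rpower (9 * INR n - 15) (1 / 3).
Definition ustar (n : nat) (r : R) : R := - alpha n * pw r (1 / 3).
Definition nu (n : nat) : R := sqrt (36 * INR n ^ 2 - 96 * INR n + 61) / 6.

Definition vfun (n : nat) (lam C r t : R) : R :=
  C * exp (- lam ^ 2 * t) * pw r (INR n - 3 / 2) * BesselJ (nu n) (lam * r).

Definition cont_on (D : R -> Prop) (f : R -> R) : Prop :=
  forall x, D x -> forall e, 0 < e -> exists d, 0 < d /\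
    forall y, D y -> Rabs (y - x) < d -> Rabs (f y - f x) < e.

Definition cont_on2 (D : R -> R -> Prop) (u : R -> R -> R) : Prop :=
  forall r t, D r t -> forall e, 0 < e -> exists d, 0 < d /\
    forall s tau, D s tau -> Rabs (s - r) < d -> Rabs (tau - t) < d ->
      Rabs (u s tau - u r t) < e.

Definition holder2 (D : R -> R -> Prop) (beta : R) (u : R -> R -> R) : Prop :=
  exists K, forall r t s tau, D r t -> D s tau ->
    Rabs (u r t - u s tau) <= K * (pw (Rabs (r - s)) beta + pw (Rabs (t - tau)) (beta / 2)).

Definition smooth (f : R -> R) : Prop :=
  exists F : nat -> R -> R, F O = f /\
    forall k x, derivable_pt_lim (F k) x (F (S k) x).

(* Main.v *)
From Stdlib Require Import Reals Lra Lia ClassicalEpsilon.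
From Coquelicot Require Import Coquelicot.
Require Import Defs.
Open Scope R_scope.

Module G.
Open Scope R_scope.

Definition clamp (a b x : R) := Rmax a (Rmin b x).

Lemma clamp_in a b x : a <= b -> a <= clamp a b x <= b.
Proof. intros; unfold clamp, Rmax, Rmin; repeat destruct Rle_dec; lra. Qed.

Lemma clamp_id a b x : a <= x <= b -> clamp a b x = x.
Proof. intros; unfold clamp, Rmax, Rmin; repeat destruct Rle_dec; lra. Qed.

Lemma clamp_lip a b x y : a <= b -> Rabs (clamp a b x - clamp a b y) <= Rabs (x - y).
Proof. intros; unfold clamp, Rmax, Rmin; repeat destruct Rle_dec;
  unfold Rabs; repeat destruct Rcase_abs; lra. Qed.

Definition rcont (a b : R) (g : R -> R) :=
  forall x, a <= x <= b -> forall e, 0 < e -> exists d, 0 < d /\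
    forall y, a <= y <= b -> Rabs (y - x) < d -> Rabs (g y - g x) < e.

Lemma evt1 (g : R -> R) a b : a <= b -> rcont a b g ->
  exists x0, a <= x0 <= b /\ forall x, a <= x <= b -> g x0 <= g x.
Proof.
  intros Hab Hc.
  destruct (continuity_ab_min (fun x => g (clamp a b x)) a b Hab) as [m [Hm1 Hm2]].
  - intros c Hc0. intros e He. simpl in *. unfold R_dist.
    destruct (Hc (clamp a b c) (clamp_in a b c Hab) e He) as [d [Hd1 Hd2]].
    exists d; split; [lra|]. intros y [_ Hy].
    apply Hd2. apply clamp_in; lra.
    eapply Rle_lt_trans; [apply clamp_lip; lra| exact Hy].
  - exists m; split; [exact Hm2|]. intros x Hx.
    specialize (Hm1 x Hx). rewrite !clamp_id in Hm1; lra.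
Qed.

Definition unif2 (a b c d : R) (F : R -> R -> R) :=
  forall e, 0 < e -> exists dl, 0 < dl /\ forall r s t tau,
    a <= r <= b -> a <= s <= b -> c <= t <= d -> c <= tau <= d ->
    Rabs (r - s) < dl -> Rabs (t - tau) < dl -> Rabs (F r t - F s tau) < e.

Lemma evt2 a b c d F : a <= b -> c <= d -> unif2 a b c d F ->
  exists r0 t0, a <= r0 <= b /\ c <= t0 <= d /\
    forall r t, a <= r <= b -> c <= t <= d -> F r0 t0 <= F r t.
Proof.
  intros Hab Hcd HF.
  assert (Hslice : forall t, c <= t <= d -> exists x0, a <= x0 <= b /\
     forall x, a <= x <= b -> F x0 t <= F x t).
  { intros t Ht. apply evt1; auto. intros x Hx e He.
    destruct (HF e He) as [dl [Hdl H]]. exists dl; split; auto.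
    intros y Hy Hyx. apply H; auto. rewrite Rminus_diag, Rabs_R0; lra. }
  set (rm := fun t => match excluded_middle_informative (c <= t <= d) with
     | left H => proj1_sig (constructive_indefinite_description _ (Hslice t H))
     | right _ => a end).
  assert (Hrm : forall t, c <= t <= d -> a <= rm t <= b /\
     forall x, a <= x <= b -> F (rm t) t <= F x t).
  { intros t Ht. unfold rm. destruct excluded_middle_informative; [|contradiction].
    destruct constructive_indefinite_description as [x0 Hx0]; simpl; auto. }
  destruct (evt1 (fun t => F (rm t) t) c d Hcd) as [t0 [Ht0 Hmin]].
  - intros t Ht e He. destruct (HF (e/2) ltac:(lra)) as [dl [Hdl H]].
    exists dl; split; auto. intros y Hy Hyt.
    destruct (Hrm t Ht) as [Ht1 Ht2]. destruct (Hrm y Hy) as [Hy1 Hy2].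
    assert (A1 := Ht2 (rm y) Hy1). assert (A2 := Hy2 (rm t) Ht1).
    assert (B1 : Rabs (F (rm y) y - F (rm y) t) < e/2).
    { apply H; auto. rewrite Rminus_diag, Rabs_R0; lra. }
    assert (B2 : Rabs (F (rm t) y - F (rm t) t) < e/2).
    { apply H; auto. rewrite Rminus_diag, Rabs_R0; lra. }
    revert B1 B2; unfold Rabs; repeat destruct Rcase_abs; lra.
  - exists (rm t0), t0. destruct (Hrm t0 Ht0) as [H1 H2].
    split; auto; split; auto. intros r t Hr Ht.
    eapply Rle_trans; [apply (Hmin t Ht)|]. apply (proj2 (Hrm t Ht)); auto.
Qed.

Lemma unif2_bounded a b c d F : a <= b -> c <= d -> unif2 a b c d F ->
  exists M, forall r t, a <= r <= b -> c <= t <= d -> Rabs (F r t) <= M.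
Proof.
  intros Hab Hcd HF.
  destruct (evt2 a b c d F Hab Hcd HF) as [r0 [t0 [_ [_ H0]]]].
  assert (HF' : unif2 a b c d (fun r t => - F r t)).
  { intros e He. destruct (HF e He) as [dl [Hdl H]]. exists dl; split; auto.
    intros. replace (- F r t - - F s tau) with (- (F r t - F s tau)) by ring.
    rewrite Rabs_Ropp; auto. }
  destruct (evt2 a b c d _ Hab Hcd HF') as [r1 [t1 [_ [_ H1]]]].
  exists (Rabs (F r0 t0) + Rabs (F r1 t1)). intros r t Hr Ht.
  specialize (H0 r t Hr Ht). specialize (H1 r t Hr Ht).
  unfold Rabs; repeat destruct Rcase_abs; lra.
Qed.

Lemma unif2_plus a b c d F G : unif2 a b c d F -> unif2 a b c d G ->
  unif2 a b c d (fun r t => F r t + G r t).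
Proof.
  intros HF HG e He. destruct (HF (e/2) ltac:(lra)) as [d1 [Hd1 H1]].
  destruct (HG (e/2) ltac:(lra)) as [d2 [Hd2 H2]].
  exists (Rmin d1 d2); split; [apply Rmin_pos; auto|]. intros.
  assert (Rabs (r - s) < d1) by (apply Rlt_le_trans with (Rmin d1 d2); [assumption|apply Rmin_l]).
  assert (Rabs (t - tau) < d1) by (apply Rlt_le_trans with (Rmin d1 d2); [assumption|apply Rmin_l]).
  assert (Rabs (r - s) < d2) by (apply Rlt_le_trans with (Rmin d1 d2); [assumption|apply Rmin_r]).
  assert (Rabs (t - tau) < d2) by (apply Rlt_le_trans with (Rmin d1 d2); [assumption|apply Rmin_r]).
  specialize (H1 r s t tau H H0 H3 H4 H7 H8).
  specialize (H2 r s t tau H H0 H3 H4 H9 H10).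
  revert H1 H2; unfold Rabs; repeat destruct Rcase_abs; lra.
Qed.

Lemma unif2_opp a b c d F : unif2 a b c d F -> unif2 a b c d (fun r t => - F r t).
Proof.
  intros HF e He. destruct (HF e He) as [dl [Hdl H]]. exists dl; split; auto.
  intros. replace (- F r t - - F s tau) with (- (F r t - F s tau)) by ring.
  rewrite Rabs_Ropp; auto.
Qed.

Lemma unif2_mult a b c d F G : a <= b -> c <= d -> unif2 a b c d F -> unif2 a b c d G ->
  unif2 a b c d (fun r t => F r t * G r t).
Proof.
  intros Hab Hcd HF HG.
  destruct (unif2_bounded a b c d F Hab Hcd HF) as [MF HMF].
  destruct (unif2_bounded a b c d G Hab Hcd HG) as [MG HMG].
  intros e He.
  set (MF' := Rabs MF + 1). set (MG' := Rabs MG + 1).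
  assert (PF : 0 < MF') by (unfold MF'; generalize (Rabs_pos MF); lra).
  assert (PG : 0 < MG') by (unfold MG'; generalize (Rabs_pos MG); lra).
  destruct (HF (e / (4 * MG')) ltac:(apply Rdiv_lt_0_compat; lra)) as [d1 [Hd1 H1]].
  destruct (HG (e / (4 * MF')) ltac:(apply Rdiv_lt_0_compat; lra)) as [d2 [Hd2 H2]].
  exists (Rmin d1 d2); split; [apply Rmin_pos; auto|]. intros.
  assert (Rabs (r - s) < d1) by (apply Rlt_le_trans with (Rmin d1 d2); [assumption|apply Rmin_l]).
  assert (Rabs (t - tau) < d1) by (apply Rlt_le_trans with (Rmin d1 d2); [assumption|apply Rmin_l]).
  assert (Rabs (r - s) < d2) by (apply Rlt_le_trans with (Rmin d1 d2); [assumption|apply Rmin_r]).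
  assert (Rabs (t - tau) < d2) by (apply Rlt_le_trans with (Rmin d1 d2); [assumption|apply Rmin_r]).
  specialize (H1 r s t tau H H0 H3 H4 H7 H8).
  specialize (H2 r s t tau H H0 H3 H4 H9 H10).
  replace (F r t * G r t - F s tau * G s tau) with
    ((F r t - F s tau) * G r t + F s tau * (G r t - G s tau)) by ring.
  eapply Rle_lt_trans; [apply Rabs_triang|]. rewrite !Rabs_mult.
  assert (Rabs (G r t) <= MG') by (specialize (HMG r t H H3); unfold MG'; generalize (Rle_abs MG); lra).
  assert (Rabs (F s tau) <= MF') by (specialize (HMF s tau H0 H4); unfold MF'; generalize (Rle_abs MF); lra).
  assert (Rabs (F r t - F s tau) * Rabs (G r t) <= e / (4 * MG') * MG').
  { apply Rmult_le_compat; try apply Rabs_pos; lra. }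
  assert (Rabs (F s tau) * Rabs (G r t - G s tau) <= MF' * (e / (4 * MF'))).
  { apply Rmult_le_compat; try apply Rabs_pos; lra. }
  replace (e / (4 * MG') * MG') with (e/4) in H13 by (field; lra).
  replace (MF' * (e / (4 * MF'))) with (e/4) in H14 by (field; lra).
  lra.
Qed.

End G.
Import G.

Module G2.
Open Scope R_scope.

Lemma unif2_r a b c d (f : R -> R) : (forall x, a <= x <= b -> continuity_pt f x) ->
  unif2 a b c d (fun r t => f r).
Proof.
  intros Hf e He. destruct (Heine f (fun x => a <= x <= b) (compact_P3 a b) Hf (mkposreal e He))
    as [[dl Hdl] H]. exists dl; split; [exact Hdl|]. intros. apply H; auto.
Qed.

Lemma unif2_t a b c d (f : R -> R) : (forall x, c <= x <= d -> continuity_pt f x) ->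
  unif2 a b c d (fun r t => f t).
Proof.
  intros Hf e He. destruct (Heine f (fun x => c <= x <= d) (compact_P3 c d) Hf (mkposreal e He))
    as [[dl Hdl] H]. exists dl; split; [exact Hdl|]. intros. apply H; auto.
Qed.

Lemma unif2_ext a b c d F G : unif2 a b c d F ->
  (forall r t, a <= r <= b -> c <= t <= d -> F r t = G r t) -> unif2 a b c d G.
Proof.
  intros HF E e He. destruct (HF e He) as [dl [Hdl H]]. exists dl; split; auto.
  intros. rewrite <- !E; auto.
Qed.

Lemma second_test (h h1 h2 : R -> R) a b r0 : a < r0 < b ->
  (forall r, a < r < b -> derivable_pt_lim h r (h1 r) /\ derivable_pt_lim h1 r (h2 r)) ->
  (forall r, a < r < b -> h r0 <= h r) -> h1 r0 = 0 /\ 0 <= h2 r0.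
Proof.
  intros Hr0 Hd Hmin.
  assert (H1 : h1 r0 = 0).
  { destruct (Hd r0 Hr0) as [D _].
    assert (pr : derivable_pt h r0) by (exists (h1 r0); exact D).
    rewrite <- (derive_pt_eq_0 h r0 (h1 r0) pr D).
    apply (deriv_minimum h a b r0 pr); try lra. intros; apply Hmin; lra. }
  split; auto.
  destruct (Rle_or_lt 0 (h2 r0)) as [|Hneg]; auto. exfalso.
  destruct (Hd r0 Hr0) as [_ D2].
  destruct (D2 (- h2 r0 / 2) ltac:(lra)) as [[dl Hdl] Hx]. simpl in Hx.
  set (x := Rmin (dl/2) ((b - r0)/2)).
  assert (Hx0 : 0 < x) by (unfold x; apply Rmin_pos; lra).
  assert (Hxd : x < dl) by (unfold x; generalize (Rmin_l (dl/2) ((b-r0)/2)); lra).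
  assert (Hxb : x < b - r0) by (unfold x; generalize (Rmin_r (dl/2) ((b-r0)/2)); lra).
  assert (Hneg1 : forall y, 0 < y <= x -> h1 (r0 + y) < 0).
  { intros y Hy. assert (A := Hx y ltac:(lra) ltac:(rewrite Rabs_right; lra)).
    rewrite H1, Rminus_0_r in A.
    assert (B : h1 (r0 + y) / y < 0).
    { revert A; unfold Rabs; destruct Rcase_abs; intros; lra. }
    destruct (Rle_or_lt 0 (h1 (r0+y))) as [C|C]; auto.
    assert (0 <= h1 (r0 + y) / y) by (unfold Rdiv; apply Rmult_le_pos; [lra| left; apply Rinv_0_lt_compat; lra]). lra. }
  destruct (MVT_cor2 h h1 r0 (r0 + x)) as [c [Hc1 Hc2]]; [lra| |].
  { intros c Hc. apply Hd; lra. }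
  assert (h1 c < 0) by (replace c with (r0 + (c - r0)) by ring; apply Hneg1; lra).
  assert (h1 c * (r0 + x - r0) < 0) by (apply Rmult_neg_pos; lra).
  assert (h r0 <= h (r0 + x)) by (apply Hmin; lra). lra.
Qed.

Lemma left_min_deriv (p : R -> R) l t0 eta : 0 < eta ->
  derivable_pt_lim p t0 l -> (forall t, t0 - eta < t < t0 -> p t0 <= p t) -> l <= 0.
Proof.
  intros He D Hm. destruct (Rle_or_lt l 0) as [|Hl]; auto. exfalso.
  destruct (D (l/2) ltac:(lra)) as [[dl Hdl] Hx]. simpl in Hx.
  set (y := - Rmin (dl/2) (eta/2)).
  assert (Hy : 0 < Rmin (dl/2) (eta/2)) by (apply Rmin_pos; lra).
  assert (Hy1 := Rmin_l (dl/2) (eta/2)). assert (Hy2 := Rmin_r (dl/2) (eta/2)).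
  assert (A := Hx y ltac:(unfold y; lra) ltac:(unfold y; rewrite Rabs_Ropp, Rabs_right; lra)).
  assert (B : (p (t0 + y) - p t0) / y > 0).
  { revert A; unfold Rabs; destruct Rcase_abs; intros; lra. }
  assert (C : p t0 <= p (t0 + y)) by (apply Hm; unfold y; lra).
  assert ((p (t0 + y) - p t0) / y <= 0).
  { unfold Rdiv. rewrite <- (Rmult_0_r (p (t0 + y) - p t0)).
    apply Rmult_le_compat_l; [lra|]. left; apply Rinv_lt_0_compat; unfold y; lra. }
  lra.
Qed.

End G2.
Import G2.

Module G3.
Open Scope R_scope.

Lemma D_mult f g x df dg : derivable_pt_lim f x df -> derivable_pt_lim g x dg ->
  derivable_pt_lim (fun t => f t * g t) x (df * g x + f x * dg).
Proof. intros; exact (derivable_pt_lim_mult f g x df dg H H0). Qed.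
Lemma D_plus f g x df dg : derivable_pt_lim f x df -> derivable_pt_lim g x dg ->
  derivable_pt_lim (fun t => f t + g t) x (df + dg).
Proof. intros; exact (derivable_pt_lim_plus f g x df dg H H0). Qed.
Lemma D_minus f g x df dg : derivable_pt_lim f x df -> derivable_pt_lim g x dg ->
  derivable_pt_lim (fun t => f t - g t) x (df - dg).
Proof. intros; exact (derivable_pt_lim_minus f g x df dg H H0). Qed.
Lemma D_const c x : derivable_pt_lim (fun _ => c) x 0.
Proof. exact (derivable_pt_lim_const c x). Qed.
Lemma D_id x : derivable_pt_lim (fun t => t) x 1.
Proof. exact (derivable_pt_lim_id x). Qed.
Lemma D_comp f g x df dg : derivable_pt_lim f x df -> derivable_pt_lim g (f x) dg ->
  derivable_pt_lim (fun t => g (f t)) x (dg * df).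
Proof. intros; exact (derivable_pt_lim_comp f g x df dg H H0). Qed.
Lemma D_ext f g x l : (forall t, f t = g t) -> derivable_pt_lim f x l -> derivable_pt_lim g x l.
Proof. intros E D. intros e He. destruct (D e He) as [d Hd]. exists d. intros.
  rewrite <- !E. auto. Qed.
Lemma D_eq f x l1 l2 : l1 = l2 -> derivable_pt_lim f x l1 -> derivable_pt_lim f x l2.
Proof. intros ->; auto. Qed.
Lemma D_exp_lin k x : derivable_pt_lim (fun t => exp (k * t)) x (k * exp (k * x)).
Proof.
  apply D_eq with (exp (k * x) * (k * 1 + 0 * x)); [ring|].
  apply (D_comp (fun t => k * t) exp).
  apply (D_ext (fun t => (fun _ => k) t * (fun t => t) t)); [auto|].
  apply D_eq with (0 * x + k * 1); [ring|]. apply D_mult; [apply D_const|apply D_id].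
  apply derivable_pt_lim_exp.
Qed.

Lemma minprin (w wr wrr wt : R -> R -> R) (a b T K : R) :
  a < b -> 0 < T -> 0 <= K ->
  unif2 a b 0 T w ->
  (forall r t, a < r < b -> 0 < t <= T ->
     derivable_pt_lim (fun s => w s t) r (wr r t) /\
     derivable_pt_lim (fun s => wr s t) r (wrr r t) /\
     derivable_pt_lim (fun s => w r s) t (wt r t)) ->
  (forall r t, a < r < b -> 0 < t <= T -> wr r t = 0 -> w r t < 0 ->
     wt r t >= wrr r t + K * w r t) ->
  (forall t, 0 <= t <= T -> w a t >= 0 /\ w b t >= 0) ->
  (forall r, a <= r <= b -> w r 0 >= 0) ->
  forall r t, a <= r <= b -> 0 <= t <= T -> w r t >= 0.
Proof.
  intros Hab HT HK Hu Hd Hpde Hbd Hin r1 t1 Hr1 Ht1.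
  destruct (Rle_or_lt 0 (w r1 t1)) as [|Hneg]; [lra|exfalso].
  set (E := fun t => exp (- K * t)).
  assert (HE : forall t, 0 < E t) by (intros; apply exp_pos).
  set (dl := - E t1 * w r1 t1 / (2 * (T + 1))).
  assert (Hdl : 0 < dl).
  { unfold dl. apply Rdiv_lt_0_compat; [|lra].
    specialize (HE t1). nra. }
  set (Phi := fun r t => E t * w r t + dl * t).
  assert (HPhi : unif2 a b 0 T Phi).
  { apply unif2_plus.
    - apply unif2_mult; try lra; auto. apply unif2_t. intros; unfold E.
      apply derivable_continuous_pt. exists (- K * exp (- K * x)). apply D_exp_lin.
    - apply unif2_t. intros. apply derivable_continuous_pt.
      exists (dl * 1 + 0 * x).
      apply (D_ext (fun t => (fun _ => dl) t * (fun t => t) t)); [auto|].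
      apply D_eq with (0 * x + dl * 1); [ring|]. apply D_mult; [apply D_const|apply D_id]. }
  destruct (evt2 a b 0 T Phi ltac:(lra) ltac:(lra) HPhi) as [r0 [t0 [Hr0 [Ht0 Hmin]]]].
  assert (Hlt : Phi r0 t0 < 0).
  { apply Rle_lt_trans with (Phi r1 t1); [apply Hmin; auto|]. unfold Phi, dl.
    assert (E t1 * w r1 t1 < 0) by (specialize (HE t1); nra).
    assert (t1 / (2 * (T + 1)) < 1) by (apply (Rmult_lt_reg_r (2 * (T + 1))); [lra|]; unfold Rdiv; rewrite Rmult_assoc, Rinv_l; lra).
    replace (E t1 * w r1 t1 + - E t1 * w r1 t1 / (2 * (T + 1)) * t1) with
      (E t1 * w r1 t1 * (1 - t1 / (2 * (T + 1)))) by (field; lra).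
    apply Rmult_neg_pos; lra. }
  assert (Hw0 : w r0 t0 < 0).
  { unfold Phi in Hlt. assert (dl * t0 >= 0) by (apply Rle_ge, Rmult_le_pos; lra).
    specialize (HE t0). destruct (Rle_or_lt 0 (w r0 t0)); auto. nra. }
  assert (Ht0p : 0 < t0).
  { destruct (Rle_or_lt t0 0); auto. assert (t0 = 0) by lra. subst t0.
    specialize (Hin r0 Hr0). lra. }
  assert (Hr0i : a < r0 < b).
  { destruct (Hbd t0 ltac:(lra)). split.
    - destruct (Rle_or_lt r0 a); auto. assert (r0 = a) by lra. subst r0. lra.
    - destruct (Rle_or_lt b r0); auto. assert (r0 = b) by lra. subst r0. lra. }
  destruct (Hd r0 t0 Hr0i ltac:(lra)) as [D1 [D2 D3]].
  destruct (second_test (fun s => w s t0) (fun s => wr s t0) (fun s => wrr s t0) a b r0 Hr0i)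
    as [Hz Hpos].
  { intros r Hr. destruct (Hd r t0 Hr ltac:(lra)) as [A1 [A2 _]]. split; auto. }
  { intros r Hr. assert (Phi r0 t0 <= Phi r t0) by (apply Hmin; lra).
    unfold Phi in H. specialize (HE t0).
    apply Rmult_le_reg_l with (E t0); auto. lra. }
  assert (Hp := Hpde r0 t0 Hr0i ltac:(lra) Hz Hw0).
  assert (Dpsi : derivable_pt_lim (fun t => Phi r0 t) t0
                   (- K * E t0 * w r0 t0 + E t0 * wt r0 t0 + dl)).
  { unfold Phi.
    apply D_eq with ((- K * exp (- K * t0)) * w r0 t0 + E t0 * wt r0 t0 + (0 * t0 + dl * 1));
      [unfold E; ring|].
    apply (D_plus (fun t => E t * w r0 t) (fun t => dl * t)).
    - apply (D_mult E (fun t => w r0 t)); auto. unfold E. apply D_exp_lin.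
    - apply (D_mult (fun _ => dl) (fun t => t)); [apply D_const|apply D_id]. }
  assert (Hle := left_min_deriv (fun t => Phi r0 t) _ t0 t0 Ht0p Dpsi).
  assert (- K * E t0 * w r0 t0 + E t0 * wt r0 t0 + dl <= 0).
  { apply Hle. intros t Ht. apply Hmin; lra. }
  specialize (HE t0).
  assert (E t0 * (wt r0 t0 - K * w r0 t0) >= 0) by (apply Rle_ge, Rmult_le_pos; lra).
  lra.
Qed.

End G3.
Import G3.

Module GA.
Open Scope R_scope.

Definition gseq (z : R) (k : nat) : R := INR (Factorial.fact k) * Rpower (INR k) z / rprod z k.

Lemma rprod_pos z k : 0 < z -> 0 < rprod z k.
Proof. intros Hz; induction k; [simpl; auto|].
  change (rprod z (S k)) with (rprod z k * (z + INR (S k))).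
  apply Rmult_lt_0_compat; auto. generalize (pos_INR (S k)); lra. Qed.

Lemma rprod_S z k : rprod z (S k) = z * rprod (z + 1) k.
Proof.
  induction k.
  - simpl. ring.
  - change (rprod z (S (S k))) with (rprod z (S k) * (z + INR (S (S k)))).
    rewrite IHk. change (rprod (z+1) (S k)) with (rprod (z+1) k * (z + 1 + INR (S k))).
    rewrite (S_INR (S k)). ring.
Qed.

Lemma fact_pos' k : 0 < INR (Factorial.fact k).
Proof. apply lt_0_INR. apply Factorial.lt_O_fact. Qed.

Lemma gseq_pos z k : 0 < z -> 0 <= gseq z k.
Proof. intros Hz. unfold gseq. unfold Rdiv. apply Rmult_le_pos.
  apply Rmult_le_pos; [left; apply fact_pos'| unfold Rpower; left; apply exp_pos].
  left; apply Rinv_0_lt_compat, rprod_pos; auto. Qed.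

Lemma gseq_shift z k : 0 < z ->
  gseq (z + 1) (S k) = gseq z (S k) * (INR (S k) * z / (z + 1 + INR (S k))).
Proof.
  intros Hz. unfold gseq.
  assert (HS : 0 < INR (S k)) by (apply lt_0_INR; lia).
  rewrite Rpower_plus, Rpower_1 by auto.
  change (rprod (z+1) (S k)) with (rprod (z+1) k * (z + 1 + INR (S k))).
  rewrite rprod_S.
  assert (0 < rprod (z+1) k) by (apply rprod_pos; lra).
  field. repeat split; lra.
Qed.

Lemma lim_ratio z : 0 < z -> is_lim_seq (fun k => INR (S k) * z / (z + 1 + INR (S k))) z.
Proof.
  intros Hz.
  apply is_lim_seq_ext with (fun k => z - z * (z + 1) * / (z + 1 + INR (S k))).
  { intros k. assert (0 < INR (S k)) by (apply lt_0_INR; lia).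
    field. lra. }
  assert (H1 : is_lim_seq (fun k => z + 1 + INR (S k)) p_infty).
  { apply is_lim_seq_plus with (z + 1) p_infty.
    apply is_lim_seq_const. apply (is_lim_seq_incr_1 INR p_infty). apply is_lim_seq_INR.
    unfold is_Rbar_plus; simpl; reflexivity. }
  assert (H2 : is_lim_seq (fun k => / (z + 1 + INR (S k))) 0).
  { exact (is_lim_seq_inv _ p_infty H1 ltac:(discriminate)). }
  assert (H3 : is_lim_seq (fun k => z * (z + 1) * / (z + 1 + INR (S k))) (z * (z+1) * 0)).
  { apply is_lim_seq_mult'; [apply is_lim_seq_const| exact H2]. }
  assert (H4 := is_lim_seq_minus' _ _ z _ (is_lim_seq_const z) H3).
  replace (z - z * (z + 1) * 0) with z in H4 by ring. exact H4.
Qed.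

Lemma gseq_lim_shift z (L : R) : 0 < z -> is_lim_seq (gseq z) L -> is_lim_seq (gseq (z + 1)) (z * L).
Proof.
  intros Hz H. apply is_lim_seq_incr_1.
  apply is_lim_seq_ext with (fun k => gseq z (S k) * (INR (S k) * z / (z + 1 + INR (S k)))).
  { intros k; rewrite gseq_shift; auto. }
  rewrite Rmult_comm. apply is_lim_seq_mult'.
  - apply (is_lim_seq_incr_1 (gseq z) L). exact H.
  - apply lim_ratio; auto.
Qed.

Lemma gseq_lim_unshift z (L : R) : 0 < z -> is_lim_seq (gseq (z + 1)) L -> is_lim_seq (gseq z) (L / z).
Proof.
  intros Hz H. apply is_lim_seq_incr_1.
  apply is_lim_seq_ext with (fun k => gseq (z+1) (S k) * / (INR (S k) * z / (z + 1 + INR (S k)))).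
  { intros k; rewrite gseq_shift; auto. assert (0 < INR (S k)) by (apply lt_0_INR; lia).
    field. repeat split; lra. }
  apply is_lim_seq_mult'.
  - apply (is_lim_seq_incr_1 (gseq (z+1)) L). exact H.
  - apply (is_lim_seq_inv _ z (lim_ratio z Hz)). intro E. injection E. lra.
Qed.

Lemma bern w x : 0 <= w <= 1 -> 0 < x -> Rpower x w <= 1 + w * (x - 1).
Proof.
  intros Hw Hx. unfold Rpower.
  set (a := ln x). set (c := w * a).
  assert (Ea : exp a = x) by (unfold a; apply exp_ln; auto).
  assert (H1 : exp a >= exp c * (1 + a - c)).
  { replace (exp a) with (exp c * exp (a - c)) by (rewrite <- exp_plus; f_equal; ring).
    apply Rle_ge, Rmult_le_compat_l; [left; apply exp_pos|].
    generalize (exp_ineq1_le (a - c)); lra. }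
  assert (H2 : 1 >= exp c * (1 - c)).
  { replace 1 with (exp c * exp (- c)) at 1 by (rewrite <- exp_plus; replace (c + - c) with 0 by ring; apply exp_0).
    apply Rle_ge, Rmult_le_compat_l; [left; apply exp_pos|].
    generalize (exp_ineq1_le (- c)); lra. }
  assert (w * exp a + (1 - w) * 1 >= exp c * (w * (1 + a - c) + (1 - w) * (1 - c))) by nra.
  replace (w * (1 + a - c) + (1 - w) * (1 - c)) with 1 in H by (unfold c; ring).
  rewrite Ea in H. lra.
Qed.

Lemma Rpower_ratio x y w : 0 < x -> 0 < y -> Rpower x w = Rpower (x / y) w * Rpower y w.
Proof. intros. rewrite Rpower_mult_distr. f_equal. field. lra.
  apply Rdiv_lt_0_compat; auto. auto. Qed.

Lemma Rpower_pos x w : 0 < Rpower x w.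
Proof. unfold Rpower; apply exp_pos. Qed.

Lemma gauss_base w : 0 < w <= 1 -> exists L, 0 < L /\ is_lim_seq (gseq w) L.
Proof.
  intros Hw.
  set (A := fun k => gseq w (S k)).
  set (B := fun k => INR (Factorial.fact k) * Rpower (INR k + 1) w / rprod w k).
  assert (Agrow : Un_growing A).
  { intros k. unfold A, gseq.
    set (m := INR (S k)).
    assert (Hm : 0 < m) by (apply lt_0_INR; lia).
    change (rprod w (S (S k))) with (rprod w (S k) * (w + INR (S (S k)))).
    rewrite (S_INR (S k)). fold m.
    change (Factorial.fact (S (S k))) with ((S (S k)) * Factorial.fact (S k))%nat.
    rewrite mult_INR, (S_INR (S k)). fold m.
    set (p := Rpower m w). set (p' := Rpower (m + 1) w).
    set (F := INR (Factorial.fact (S k))). set (Rr := rprod w (S k)).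
    assert (HF : 0 < F) by apply fact_pos'.
    assert (HR : 0 < Rr) by (apply rprod_pos; lra).
    assert (Hp' : 0 < p') by apply Rpower_pos.
    assert (Hp : p = Rpower (m / (m + 1)) w * p') by (apply Rpower_ratio; lra).
    assert (Hb := bern w (m / (m + 1)) ltac:(lra) ltac:(apply Rdiv_lt_0_compat; lra)).
    assert (Hb' : p <= p' * (1 - w / (m + 1))).
    { rewrite Hp. rewrite Rmult_comm. apply Rmult_le_compat_l; [lra|].
      replace (1 - w / (m+1)) with (1 + w * (m / (m + 1) - 1)) by (field; lra). exact Hb. }
    assert (Key : p * (w + (m + 1)) <= (m + 1) * p').
    { assert (p * (w + (m+1)) <= p' * (1 - w / (m + 1)) * (w + (m+1))) by
        (apply Rmult_le_compat_r; lra).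
      replace (p' * (1 - w / (m + 1)) * (w + (m + 1))) with
        (p' * ((m+1) * (m+1) - w * w) / (m + 1)) in H by (field; lra).
      assert (p' * ((m + 1) * (m + 1) - w * w) / (m + 1) <= (m+1) * p').
      { apply (Rmult_le_reg_r (m+1)); [lra|]. unfold Rdiv.
        rewrite Rmult_assoc, Rinv_l by lra. nra. }
      lra. }
    unfold Rdiv.
    apply Rle_trans with (F * p * / Rr * ((w + (m+1)) * / (w + (m+1)))).
    { rewrite Rinv_r by lra. lra. }
    rewrite Rinv_mult.
    replace (F * p * / Rr * ((w + (m + 1)) * / (w + (m + 1)))) with
      ((F * / Rr * / (w + (m+1))) * (p * (w + (m+1)))) by ring.
    replace ((m + 1) * F * p' * (/ Rr * / (w + (m + 1)))) with
      ((F * / Rr * / (w + (m+1))) * ((m+1) * p')) by ring.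
    apply Rmult_le_compat_l; auto.
    left. repeat apply Rmult_lt_0_compat; try apply Rinv_0_lt_compat; lra. }
  assert (Bdec : forall k, B (S k) <= B k).
  { intros k. unfold B.
    set (m := INR k).
    change (rprod w (S k)) with (rprod w k * (w + INR (S k))).
    change (Factorial.fact (S k)) with ((S k) * Factorial.fact k)%nat.
    rewrite mult_INR, !S_INR. fold m.
    assert (Hm : 0 <= m) by apply pos_INR.
    set (p := Rpower (m + 1) w). set (p' := Rpower (m + 1 + 1) w).
    set (F := INR (Factorial.fact k)). set (Rr := rprod w k).
    assert (HF : 0 < F) by apply fact_pos'.
    assert (HR : 0 < Rr) by (apply rprod_pos; lra).
    assert (Hp : 0 < p) by apply Rpower_pos.
    assert (Hp' : p' = Rpower ((m + 1 + 1) / (m + 1)) w * p) by (apply Rpower_ratio; lra).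
    assert (Hb := bern w ((m + 1 + 1) / (m + 1)) ltac:(lra) ltac:(apply Rdiv_lt_0_compat; lra)).
    assert (Key : (m + 1) * p' <= p * (w + (m + 1))).
    { rewrite Hp'. replace (1 + w * ((m + 1 + 1) / (m + 1) - 1)) with ((w + (m+1)) / (m+1)) in Hb by (field; lra).
      apply Rle_trans with ((m+1) * ((w + (m + 1)) / (m + 1) * p)).
      apply Rmult_le_compat_l; [lra|]. apply Rmult_le_compat_r; lra.
      right; field; lra. }
    unfold Rdiv. rewrite Rinv_mult.
    replace ((m + 1) * F * p' * (/ Rr * / (w + (m + 1)))) with
      ((F * / Rr * / (w + (m+1))) * ((m+1) * p')) by ring.
    replace (F * p * / Rr) with ((F * / Rr * / (w + (m+1))) * (p * (w + (m+1)))) by (field; lra).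
    apply Rmult_le_compat_l; auto.
    left. repeat apply Rmult_lt_0_compat; try apply Rinv_0_lt_compat; lra. }
  assert (Bdec' : forall k, B k <= B 0%nat).
  { induction k; [lra|]. specialize (Bdec k). lra. }
  assert (AB : forall k, A k <= B (S k)).
  { intros k. unfold A, B, gseq. unfold Rdiv.
    apply Rmult_le_compat_r; [left; apply Rinv_0_lt_compat, rprod_pos; lra|].
    apply Rmult_le_compat_l; [left; apply fact_pos'|].
    replace (INR (S k) + 1) with (INR (S (S k))) by (rewrite (S_INR (S k)); ring). apply Rle_Rpower_l; [lra|]. rewrite (S_INR (S k)).
    split; [apply lt_0_INR; lia| lra]. }
  assert (Hub : has_ub A).
  { exists (B 0%nat). intros x [i ->]. specialize (AB i). specialize (Bdec' (S i)). lra. }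
  destruct (growing_cv A Agrow Hub) as [L HL].
  assert (HA0 := growing_ineq A L Agrow HL 0%nat).
  assert (PA0 : 0 < A 0%nat).
  { unfold A, gseq. unfold Rdiv. apply Rmult_lt_0_compat.
    apply Rmult_lt_0_compat; [apply fact_pos'|apply Rpower_pos].
    apply Rinv_0_lt_compat, rprod_pos; lra. }
  exists L. split; [lra|].
  apply is_lim_seq_incr_1. apply is_lim_seq_Reals. exact HL.
Qed.

Lemma gauss_all z : 0 < z -> exists L, 0 < L /\ is_lim_seq (gseq z) L.
Proof.
  intros Hz.
  assert (H : forall m : nat, forall z, 0 < z <= INR m + 1 -> exists L, 0 < L /\ is_lim_seq (gseq z) L).
  { induction m; intros y Hy.
    - apply gauss_base. simpl in Hy. lra.
    - destruct (Rle_or_lt y 1) as [Hy1|Hy1]; [apply gauss_base; lra|].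
      rewrite S_INR in Hy.
      destruct (IHm (y - 1) ltac:(lra)) as [L [HL HL']].
      exists ((y - 1) * L). split; [apply Rmult_lt_0_compat; lra|].
      replace y with (y - 1 + 1) at 1 by ring. apply gseq_lim_shift; auto. lra. }
  destruct (INR_unbounded z) as [m Hm]. apply (H m). lra.
Qed.

Lemma Gamma_spec z : 0 < z -> 0 < Gamma z /\ Un_cv (gseq z) (Gamma z).
Proof.
  intros Hz. destruct (gauss_all z Hz) as [L [HL HL']].
  apply is_lim_seq_Reals in HL'.
  assert (HG : Un_cv (gseq z) (Gamma z)).
  { unfold Gamma, lim_seq. apply (epsilon_spec (inhabits 0) (fun l => Un_cv _ l)).
    exists L. exact HL'. }
  rewrite (UL_sequence _ _ _ HG HL'). auto.
Qed.

Lemma Gamma_succ z : 0 < z -> Gamma (z + 1) = z * Gamma z.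
Proof.
  intros Hz. destruct (Gamma_spec z Hz) as [_ H1].
  destruct (Gamma_spec (z+1) ltac:(lra)) as [_ H2].
  apply is_lim_seq_Reals in H1. assert (H3 := gseq_lim_shift z _ Hz H1).
  apply is_lim_seq_Reals in H3. exact (UL_sequence _ _ _ H2 H3).
Qed.

End GA.
Import GA.

Module GB.
Open Scope R_scope.

Section Bes.
Variable nv : R.
Hypothesis Hnv : 0 < nv.

Definition cf (m : nat) : R := (-1) ^ m / (INR (Factorial.fact m) * Gamma (INR m + nv + 1)).

Lemma Gam_pos m : 0 < Gamma (INR m + nv + 1).
Proof. apply Gamma_spec. generalize (pos_INR m); lra. Qed.

Lemma cf_rec m : cf (S m) * (INR (S m) * (INR m + nv + 1)) = - cf m.
Proof.
  unfold cf.
  replace (INR (S m) + nv + 1) with ((INR m + nv + 1) + 1) by (rewrite S_INR; ring).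
  rewrite Gamma_succ by (generalize (pos_INR m); lra).
  change (Factorial.fact (S m)) with (S m * Factorial.fact m)%nat.
  rewrite mult_INR. simpl pow.
  assert (0 < INR (S m)) by (apply lt_0_INR; lia).
  assert (0 < INR (Factorial.fact m)) by apply fact_pos'.
  assert (Hg := Gam_pos m).
  assert (0 < INR m + nv + 1) by (generalize (pos_INR m); lra).
  field. repeat split; lra.
Qed.

Lemma cf_neq m : cf m <> 0.
Proof.
  unfold cf. unfold Rdiv. apply Rmult_integral_contrapositive. split.
  apply pow_nonzero; lra.
  apply Rinv_neq_0_compat. assert (0 < INR (Factorial.fact m)) by apply fact_pos'.
  assert (Hg := Gam_pos m). nra.
Qed.

Lemma cf_radius : CV_radius cf = p_infty.
Proof.
  apply CV_radius_infinite_DAlembert; [apply cf_neq|].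
  apply is_lim_seq_ext with (fun m => / (INR (S m) * (INR m + nv + 1))).
  { intros m. assert (E := cf_rec m).
    assert (0 < INR (S m)) by (apply lt_0_INR; lia).
    assert (0 < INR m + nv + 1) by (generalize (pos_INR m); lra).
    assert (cf (S m) = - cf m / (INR (S m) * (INR m + nv + 1))).
    { rewrite <- E. field. lra. }
    rewrite H1. replace (- cf m / (INR (S m) * (INR m + nv + 1)) / cf m) with
      (- / (INR (S m) * (INR m + nv + 1))) by (field; repeat split; try exact (cf_neq m); lra).
    rewrite Rabs_Ropp, Rabs_right; auto. left; apply Rinv_0_lt_compat; nra. }
  replace (Finite 0) with (Rbar_inv p_infty) by reflexivity.
  apply is_lim_seq_inv; [|discriminate].
  apply is_lim_seq_mult with p_infty p_infty.
  - apply (is_lim_seq_incr_1 INR p_infty). apply is_lim_seq_INR.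
  - apply is_lim_seq_plus with p_infty 1.
    apply is_lim_seq_plus with p_infty nv.
    apply is_lim_seq_INR. apply is_lim_seq_const.
    unfold is_Rbar_plus; simpl; reflexivity.
    apply is_lim_seq_const.
    unfold is_Rbar_plus; simpl; reflexivity.
  - unfold is_Rbar_mult; simpl; reflexivity.
Qed.

Definition P0 := PSeries cf.
Definition P1 := PSeries (PS_derive cf).
Definition P2 := PSeries (PS_derive (PS_derive cf)).

Lemma inrad (a : nat -> R) x : CV_radius a = p_infty -> Rbar_lt (Rabs x) (CV_radius a).
Proof. intros ->; simpl; auto. Qed.

Lemma rad1 : CV_radius (PS_derive cf) = p_infty.
Proof. rewrite CV_radius_derive; apply cf_radius. Qed.
Lemma rad2 : CV_radius (PS_derive (PS_derive cf)) = p_infty.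
Proof. rewrite !CV_radius_derive; apply cf_radius. Qed.

Lemma dP0 y : is_derive P0 y (P1 y).
Proof. apply is_derive_PSeries, inrad, cf_radius. Qed.
Lemma dP1 y : is_derive P1 y (P2 y).
Proof. apply is_derive_PSeries, inrad, rad1. Qed.

Lemma ode_P y : y * P2 y + (nv + 1) * P1 y + P0 y = 0.
Proof.
  assert (E0 : ex_pseries cf y) by (apply CV_radius_inside, inrad, cf_radius).
  assert (E1 : ex_pseries (PS_derive cf) y) by (apply CV_radius_inside, inrad, rad1).
  assert (E2 : ex_pseries (PS_derive (PS_derive cf)) y) by (apply CV_radius_inside, inrad, rad2).
  assert (E2' : ex_pseries (PS_incr_1 (PS_derive (PS_derive cf))) y) by (apply ex_pseries_incr_1; auto).
  assert (E1' : ex_pseries (PS_scal (nv + 1) (PS_derive cf)) y) by (apply ex_pseries_scal; auto; apply Rmult_comm).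
  unfold P0, P1, P2.
  rewrite <- PSeries_incr_1, <- PSeries_scal.
  rewrite <- PSeries_plus by auto.
  rewrite <- PSeries_plus; [| apply ex_pseries_plus; auto| auto].
  rewrite <- (PSeries_const_0 y). apply PSeries_ext. intros k.
  unfold PS_plus, PS_scal, PS_incr_1, PS_derive. simpl.
  unfold plus, scal, zero; simpl. unfold mult; simpl.
  destruct k as [|j].
  - assert (E := cf_rec 0). simpl in E |- *.
    rewrite <- (Ropp_involutive (cf 0)), <- E. ring.
  - assert (E := cf_rec (S j)).
    change (match j with 0%nat => 1 | S _ => INR j + 1 end) with (INR (S j)).
    rewrite <- (Ropp_involutive (cf (S j))), <- E. rewrite !S_INR. ring.
Qed.

End Bes.

End GB.
Import GB.

Module GC.
Open Scope R_scope.

Section BesC.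
Variable nv : R.
Hypothesis Hnv : 0 < nv.

Notation P0 := (P0 nv). Notation P1 := (P1 nv). Notation P2 := (P2 nv).

Lemma sum_scal (b : nat -> R) K N : sum_f_R0 (fun m => K * b m) N = K * sum_f_R0 b N.
Proof. induction N; simpl; [ring|]. rewrite IHN; ring. Qed.

Lemma pw_pos x a : 0 < x -> pw x a = Rpower x a.
Proof. intros; unfold pw; destruct Rlt_dec; [auto|lra]. Qed.

Lemma Rpower_2 y : 0 < y -> Rpower y 2 = y * y.
Proof. intros. replace 2 with (1 + 1) by ring. rewrite Rpower_plus, Rpower_1; auto. Qed.

Lemma BJ_eq x : 0 < x -> BesselJ nv x = Rpower (x / 2) nv * P0 (x * x / 4).
Proof.
  intros Hx.
  set (s := x * x / 4).
  assert (Hs : Un_cv (fun N => sum_f_R0 (fun m => cf nv m * s ^ m) N) (P0 s)).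
  { assert (H := PSeries_correct (cf nv) s (CV_radius_inside _ _ (inrad _ s (cf_radius nv Hnv)))).
    unfold is_pseries in H. apply is_lim_seq_Reals.
    apply is_lim_seq_ext with (sum_n (fun k => scal (pow_n s k) (cf nv k))).
    { intros N. rewrite sum_n_Reals. apply sum_eq. intros i _.
      rewrite pow_n_pow. unfold scal; simpl. unfold mult; simpl. ring. }
    exact H. }
  assert (Hc : Un_cv (fun N => sum_f_R0 (fun m => (-1) ^ m / (INR (Factorial.fact m) * Gamma (INR m + nv + 1))
              * pw (x / 2) (2 * INR m + nv)) N) (Rpower (x / 2) nv * P0 s)).
  { apply is_lim_seq_Reals. apply is_lim_seq_Reals in Hs.
    apply is_lim_seq_ext with (fun N => Rpower (x/2) nv * sum_f_R0 (fun m => cf nv m * s ^ m) N).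
    { intros N. rewrite <- sum_scal. apply sum_eq. intros i _.
      rewrite pw_pos by lra. rewrite Rpower_plus.
      rewrite <- Rpower_mult. rewrite Rpower_pow by apply Rpower_pos.
      rewrite (Rpower_2 (x/2)) by lra. unfold s, cf.
      replace (x / 2 * (x / 2)) with (x * x / 4) by field. unfold Rdiv. ring. }
    apply (is_lim_seq_scal_l _ (Rpower (x/2) nv) _ Hs). }
  unfold BesselJ, lim_seq.
  assert (HG := epsilon_spec (inhabits 0) (fun l => Un_cv (fun N => sum_f_R0 (fun m => (-1) ^ m / (INR (Factorial.fact m) * Gamma (INR m + nv + 1))
              * pw (x / 2) (2 * INR m + nv)) N) l) (ex_intro _ _ Hc)).
  exact (UL_sequence _ _ _ HG Hc).
Qed.


Definition qf x := Rpower (x / 2) nv.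
Definition sf x := x * x / 4.
Definition H1f x := nv * / x * P0 (sf x) + x * / 2 * P1 (sf x).
Definition H2f x := nv * (nv - 1) * / (x * x) * P0 (sf x) + (nv + / 2) * P1 (sf x)
                    + sf x * P2 (sf x).
Definition G0 x := qf x * P0 (sf x).
Definition G1 x := qf x * H1f x.
Definition G2 x := qf x * H2f x.

Lemma qf_pos x : 0 < qf x.
Proof. apply Rpower_pos. Qed.

Lemma D_qf x : 0 < x -> derivable_pt_lim qf x (nv * qf x * / x).
Proof.
  intros Hx. unfold qf.
  apply D_eq with (nv * Rpower (x / 2) (nv - 1) * (1 * / 2)).
  { replace (Rpower (x / 2) nv) with (Rpower (x / 2) (nv - 1) * Rpower (x/2) 1).
    rewrite Rpower_1 by lra. field. lra.
    rewrite <- Rpower_plus. f_equal; ring. }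
  apply (D_comp (fun t => t * / 2) (fun y => Rpower y nv)).
  - apply D_eq with (1 * / 2 + x * 0); [ring|].
    apply (D_mult (fun t => t) (fun _ => / 2)); [apply D_id|apply D_const].
  - apply derivable_pt_lim_power. lra.
Qed.

Lemma D_sf x : derivable_pt_lim sf x (x * / 2).
Proof.
  unfold sf. unfold Rdiv.
  apply D_eq with ((1 * x + x * 1) * / 4 + x * x * 0); [field|].
  apply (D_mult (fun t => t * t) (fun _ => / 4)); [apply (D_mult (fun t => t) (fun t => t)); apply D_id|apply D_const].
Qed.

Lemma D_Psf (F F' : R -> R) x : (forall y, is_derive F y (F' y)) ->
  derivable_pt_lim (fun t => F (sf t)) x (F' (sf x) * (x * / 2)).
Proof.
  intros HF. apply (D_comp sf F). apply D_sf. apply is_derive_Reals, HF.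
Qed.

Lemma D_invx x : x <> 0 -> derivable_pt_lim (fun t => / t) x (- / (x * x)).
Proof.
  intros Hx. apply D_eq with ((0 * x - 1 * 1) / Rsqr x).
  { unfold Rsqr. field. auto. }
  apply (D_ext (fun t => 1 / t)). { intros; unfold Rdiv; ring. }
  apply (derivable_pt_lim_div (fun _ => 1) (fun t => t) x 0 1). apply D_const. apply D_id. auto.
Qed.

Lemma D_G0 x : 0 < x -> derivable_pt_lim G0 x (G1 x).
Proof.
  intros Hx. unfold G0, G1, H1f.
  apply D_eq with (nv * qf x * / x * P0 (sf x) + qf x * (P1 (sf x) * (x * / 2))).
  { ring. }
  apply (D_mult qf (fun t => P0 (sf t))). apply D_qf; auto. apply D_Psf. apply dP0; auto.
Qed.

Lemma D_H1f x : 0 < x -> derivable_pt_lim H1f x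
   (nv * (- / (x * x)) * P0 (sf x) + nv * / x * (P1 (sf x) * (x * / 2))
    + / 2 * P1 (sf x) + x * / 2 * (P2 (sf x) * (x * / 2))).
Proof.
  intros Hx. unfold H1f.
  apply D_eq with ((0 * / x + nv * (- / (x * x))) * P0 (sf x) + nv * / x * (P1 (sf x) * (x * / 2))
    + ((1 * / 2 + x * 0) * P1 (sf x) + x * / 2 * (P2 (sf x) * (x * / 2)))); [ring|].
  apply (D_plus (fun t => nv * / t * P0 (sf t)) (fun t => t * / 2 * P1 (sf t))).
  - apply (D_mult (fun t => nv * / t) (fun t => P0 (sf t))).
    + apply (D_mult (fun _ => nv) (fun t => / t)). apply D_const. apply D_invx; lra.
    + apply D_Psf, dP0; auto.
  - apply (D_mult (fun t => t * / 2) (fun t => P1 (sf t))).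
    + apply (D_mult (fun t => t) (fun _ => / 2)). apply D_id. apply D_const.
    + apply D_Psf, dP1; auto.
Qed.

Lemma D_G1 x : 0 < x -> derivable_pt_lim G1 x (G2 x).
Proof.
  intros Hx. unfold G1.
  eapply D_eq; [| apply (D_mult qf H1f); [apply D_qf; auto| apply D_H1f; auto]].
  unfold G2, H2f, H1f, sf. field. lra.
Qed.

Lemma G_ode x : 0 < x -> x * x * G2 x + x * G1 x + (x * x - nv * nv) * G0 x = 0.
Proof.
  intros Hx. assert (E := ode_P nv Hnv (sf x)).
  unfold G0, G1, G2, H1f, H2f.
  replace (x * x * (qf x * (nv * (nv - 1) * / (x * x) * P0 (sf x) + (nv + / 2) * P1 (sf x) + sf x * P2 (sf x))) +
     x * (qf x * (nv * / x * P0 (sf x) + x * / 2 * P1 (sf x))) + (x * x - nv * nv) * (qf x * P0 (sf x)))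
   with (qf x * (x * x) * (sf x * P2 (sf x) + (nv + 1) * P1 (sf x) + P0 (sf x))).
  rewrite E. ring.
  unfold sf. field. lra.
Qed.

Lemma BJ_G0 x : 0 < x -> BesselJ nv x = G0 x.
Proof. intros; rewrite BJ_eq; auto. Qed.

End BesC.

End GC.
Import GC.

Module GD.
Open Scope R_scope.

Lemma D_ext_loc (f g : R -> R) x l c : c < x ->
  (forall t, c < t -> f t = g t) -> derivable_pt_lim f x l -> derivable_pt_lim g x l.
Proof.
  intros Hc E D e He. destruct (D e He) as [[d Hd] H].
  assert (Hm : 0 < Rmin d (x - c)) by (apply Rmin_pos; lra).
  exists (mkposreal _ Hm). intros h Hh Hhd. simpl in Hhd.
  assert (A1 := Rmin_l d (x - c)). assert (A2 := Rmin_r d (x - c)).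
  rewrite <- !E. apply H; auto. simpl; lra.
  lra. revert Hhd; unfold Rabs; destruct Rcase_abs; intros; lra.
Qed.

Section BesD.
Variable nv : R.
Hypothesis Hnv : 0 < nv.
Notation G0 := (G0 nv). Notation G1 := (G1 nv). Notation G2 := (G2 nv).
Notation P0 := (P0 nv). Notation P1 := (P1 nv). Notation P2 := (P2 nv).

Lemma D_BJ x : 0 < x -> derivable_pt_lim (BesselJ nv) x (G1 x).
Proof.
  intros Hx. apply (D_ext_loc G0 _ x _ 0); auto.
  intros; symmetry; apply BJ_G0; auto. apply D_G0; auto.
Qed.

Lemma cont_G1 x : 0 < x -> continuity_pt G1 x.
Proof. intros. apply derivable_continuous_pt. exists (G2 x). apply D_G1; auto. Qed.
Lemma cont_G0 x : 0 < x -> continuity_pt G0 x.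
Proof. intros. apply derivable_continuous_pt. exists (G1 x). apply D_G0; auto. Qed.

Definition hf s := nv * P0 s + 2 * s * P1 s.

Lemma cont_at0 (F : R -> R) : continuity_pt F 0 -> forall e, 0 < e ->
   exists d, 0 < d /\ forall s, Rabs s < d -> Rabs (F s - F 0) < e.
Proof.
  intros C e He. destruct (C e He) as [d [Hd H]]. exists d; split; auto.
  intros s Hs. destruct (Req_dec s 0) as [->|Hs0].
  - rewrite Rminus_diag, Rabs_R0; auto.
  - apply H. split. split; [exact I| auto]. change (Rabs (s - 0) < d). replace (s - 0) with s by ring; auto.
Qed.

Lemma cf0_pos : 0 < cf nv 0.
Proof. unfold cf. simpl. assert (H := Gam_pos nv Hnv 0). simpl in H.
  unfold Rdiv. rewrite Rmult_1_l. apply Rinv_0_lt_compat. lra. Qed.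

Lemma small_pos y : 0 < y -> exists x0, 0 < x0 < y /\ 0 < G1 x0 /\
   forall x, 0 < x <= x0 -> 0 < G0 x.
Proof.
  intros Hy.
  assert (Ch : continuity_pt hf 0).
  { apply derivable_continuous_pt. exists (nv * P1 0 + (2 * 1 * P1 0 + 2 * 0 * P2 0)).
    unfold hf. apply (D_plus (fun s => nv * P0 s) (fun s => 2 * s * P1 s)).
    - apply D_eq with (0 * P0 0 + nv * P1 0); [ring|].
      apply (D_mult (fun _ => nv) P0). apply D_const. apply is_derive_Reals, dP0; auto.
    - apply (D_mult (fun s => 2 * s) P1).
      apply D_eq with (0 * 0 + 2 * 1); [ring|]. apply (D_mult (fun _ => 2) (fun s => s)).
      apply D_const. apply D_id. apply is_derive_Reals, dP1; auto. }
  assert (Cp : continuity_pt P0 0).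
  { apply derivable_continuous_pt. exists (P1 0). apply is_derive_Reals, dP0; auto. }
  assert (p0 : P0 0 = cf nv 0) by (unfold GB.P0; rewrite PSeries_0; auto).
  assert (h0 : hf 0 = nv * cf nv 0) by (unfold hf; rewrite p0; ring).
  assert (c0 := cf0_pos).
  destruct (cont_at0 hf Ch (nv * cf nv 0 / 2) ltac:(apply Rdiv_lt_0_compat; [nra|lra])) as [d1 [Hd1 H1]].
  destruct (cont_at0 P0 Cp (cf nv 0 / 2) ltac:(lra)) as [d2 [Hd2 H2]].
  set (x0 := Rmin (y / 2) (Rmin 1 (Rmin d1 d2))).
  assert (A1 := Rmin_l (y/2) (Rmin 1 (Rmin d1 d2))).
  assert (A2 := Rmin_r (y/2) (Rmin 1 (Rmin d1 d2))).
  assert (A3 := Rmin_l 1 (Rmin d1 d2)). assert (A4 := Rmin_r 1 (Rmin d1 d2)).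
  assert (A5 := Rmin_l d1 d2). assert (A6 := Rmin_r d1 d2).
  assert (Hx0 : 0 < x0) by (unfold x0; repeat apply Rmin_pos; lra).
  fold x0 in A1, A2.
  assert (Hsf : forall x, 0 < x <= x0 -> 0 <= sf x < Rmin d1 d2).
  { intros x Hx. unfold sf. split. apply Rmult_le_pos; [nra|lra].
    assert (x * x <= x * 1) by (apply Rmult_le_compat_l; lra). lra. }
  exists x0. split; [lra|]. split.
  - unfold G1, H1f. 
    replace (nv * / x0 * P0 (sf x0) + x0 * / 2 * P1 (sf x0)) with (/ x0 * hf (sf x0)).
    2: { unfold hf, sf. field. lra. }
    apply Rmult_lt_0_compat; [apply qf_pos|]. apply Rmult_lt_0_compat; [apply Rinv_0_lt_compat; lra|].
    destruct (Hsf x0 ltac:(lra)). assert (Hb := H1 (sf x0) ltac:(rewrite Rabs_right; lra)).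
    rewrite h0 in Hb. revert Hb; unfold Rabs; destruct Rcase_abs; intros; nra.
  - intros x Hx. unfold G0. apply Rmult_lt_0_compat; [apply qf_pos|].
    destruct (Hsf x Hx). assert (Hb := H2 (sf x) ltac:(rewrite Rabs_right; lra)).
    rewrite p0 in Hb. revert Hb; unfold Rabs; destruct Rcase_abs; intros; lra.
Qed.

Lemma bessel_sign x1 : 0 < x1 ->
  (forall y, 0 < y < x1 -> exists d, d <> 0 /\ derivable_pt_lim (BesselJ nv) y d) ->
  forall y, 0 < y < x1 -> 0 < G1 y /\ 0 < G0 y.
Proof.
  intros Hx1 Hd.
  assert (S1 : forall y, 0 < y < x1 -> 0 < G1 y).
  { intros y Hy. destruct (Hd y Hy) as [d [Hd0 Hdd]].
    assert (E := uniqueness_limite _ _ _ _ Hdd (D_BJ y ltac:(lra))).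
    destruct (Rle_or_lt (G1 y) 0) as [Hn|]; auto. exfalso.
    assert (Hn' : G1 y < 0) by (destruct Hn; auto; subst; lra).
    destruct (small_pos y ltac:(lra)) as [x0 [Hx0 [Hg _]]].
    destruct (Ranalysis5.IVT_interv (fun t => - G1 t) x0 y) as [z [Hz1 Hz2]].
    + intros a Ha. apply continuity_pt_opp. apply cont_G1. lra.
    + lra.
    + lra.
    + lra.
    + destruct (Hd z ltac:(lra)) as [d' [Hd0' Hdd']].
      assert (E' := uniqueness_limite _ _ _ _ Hdd' (D_BJ z ltac:(lra))). lra. }
  intros y Hy. split; [apply S1; auto|].
  destruct (small_pos y ltac:(lra)) as [x0 [Hx0 [_ Hg]]].
  destruct (MVT_cor2 G0 G1 x0 y) as [c [Hc1 Hc2]]; [lra| |].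
  { intros c Hc. apply D_G0; lra. }
  assert (0 < G1 c) by (apply S1; lra).
  assert (0 < G0 x0) by (apply Hg; lra).
  assert (0 < G1 c * (y - x0)) by (apply Rmult_lt_0_compat; lra). lra.
Qed.

End BesD.

End GD.
Import GD.

Module GE.
Open Scope R_scope.

Lemma D_rp c r : 0 < r -> derivable_pt_lim (fun x => Rpower x c) r (c * Rpower r c * / r).
Proof.
  intros Hr. apply D_eq with (c * Rpower r (c - 1)).
  { replace (Rpower r c) with (Rpower r (c - 1) * Rpower r 1).
    rewrite Rpower_1 by lra. field. lra.
    rewrite <- Rpower_plus. f_equal; ring. }
  apply derivable_pt_lim_power; auto.
Qed.

Lemma cube_root y : 0 < y -> Rpower y (1/3) ^ 3 = y.
Proof.
  intros Hy. rewrite <- Rpower_pow by apply Rpower_pos. rewrite Rpower_mult.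
  replace (1 / 3 * INR 3) with 1 by (simpl; field). apply Rpower_1; auto.
Qed.

Section Ustar.
Variable n : nat.
Hypothesis Hn : (2 <= n)%nat.

Lemma INRn2 : 2 <= INR n.
Proof. replace 2 with (INR 2) by (simpl; ring). apply le_INR; auto. Qed.

Lemma alpha_pos : 0 < alpha n.
Proof. apply Rpower_pos. Qed.

Lemma alpha3 : alpha n ^ 3 = 9 * INR n - 15.
Proof. unfold alpha. apply cube_root. generalize INRn2; lra. Qed.

Definition sr r := Rpower r (1/3).
Definition U1 r := - alpha n / 3 * sr r * / r.
Definition U2 r := 2 * alpha n / 9 * sr r * / (r * r).

Lemma ustar_eq r : 0 < r -> ustar n r = - alpha n * sr r.
Proof. intros; unfold ustar, sr; rewrite pw_pos; auto. Qed.

Lemma D_us r : 0 < r -> derivable_pt_lim (ustar n) r (U1 r).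
Proof.
  intros Hr. apply (D_ext_loc (fun x => - alpha n * sr x) _ r _ 0); auto.
  intros; symmetry; apply ustar_eq; auto.
  apply D_eq with (0 * sr r + - alpha n * (1/3 * Rpower r (1/3) * / r)).
  { unfold U1, sr. field. lra. }
  apply (D_mult (fun _ => - alpha n) sr). apply D_const. apply D_rp; auto.
Qed.

Lemma D_U1 r : 0 < r -> derivable_pt_lim U1 r (U2 r).
Proof.
  intros Hr. unfold U1, U2.
  apply D_eq with ((0 * sr r + - alpha n / 3 * (1/3 * Rpower r (1/3) * / r)) * / r + - alpha n / 3 * sr r * (- / (r * r))).
  { unfold sr. field. lra. }
  apply (D_mult (fun x => - alpha n / 3 * sr x) (fun x => / x)).
  - apply (D_mult (fun _ => - alpha n / 3) sr). apply D_const. apply D_rp; auto.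
  - apply D_invx; lra.
Qed.

Lemma sr_pos r : 0 < sr r.
Proof. apply Rpower_pos. Qed.

Lemma stat r : 0 < r -> U2 r + (INR n - 1) / r * U1 r + (- alpha n * sr r) * U1 r ^ 3 = 0.
Proof.
  intros Hr. assert (A := alpha3). assert (S := cube_root r Hr). fold (sr r) in S.
  unfold U1, U2.
  replace ((- alpha n * sr r) * (- alpha n / 3 * sr r * / r) ^ 3) with
    (alpha n ^ 3 * sr r ^ 3 * alpha n * sr r / (27 * r * r * r)) by (field; lra).
  rewrite A, S. field. lra.
Qed.

Lemma UA2 r : 0 < r -> (- alpha n * sr r) * U1 r ^ 2 = - (3 * INR n - 5) / (3 * r).
Proof.
  intros Hr. assert (A := alpha3). assert (S := cube_root r Hr). fold (sr r) in S.
  unfold U1. replace ((- alpha n * sr r) * (- alpha n / 3 * sr r * / r) ^ 2) with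
    (- (alpha n ^ 3 * sr r ^ 3) / (9 * r * r)) by (field; lra).
  rewrite A, S. field. lra.
Qed.

Lemma A3 r : 0 < r -> U1 r ^ 3 = - (3 * INR n - 5) / (9 * (r * r)).
Proof.
  intros Hr. assert (A := alpha3). assert (S := cube_root r Hr). fold (sr r) in S.
  unfold U1. replace ((- alpha n / 3 * sr r * / r) ^ 3) with
    (- (alpha n ^ 3 * sr r ^ 3) / (27 * r * r * r)) by (field; lra).
  rewrite A, S. field. lra.
Qed.

Lemma U1_neg r : 0 < r -> U1 r < 0.
Proof.
  intros Hr. unfold U1. assert (H1 := alpha_pos). assert (H2 := sr_pos r).
  assert (0 < alpha n / 3 * sr r * / r) by (apply Rmult_lt_0_compat; [apply Rmult_lt_0_compat; lra| apply Rinv_0_lt_compat; lra]).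
  replace (- alpha n / 3 * sr r * / r) with (- (alpha n / 3 * sr r * / r)) by (field; lra). lra.
Qed.

End Ustar.

Lemma D_lin k x : derivable_pt_lim (fun t => k * t) x k.
Proof. apply D_eq with (0 * x + k * 1); [ring|]. apply (D_mult (fun _ => k) (fun t => t)); [apply D_const|apply D_id]. Qed.

Lemma D_scal k f x l : derivable_pt_lim f x l -> derivable_pt_lim (fun t => k * f t) x (k * l).
Proof. intros. apply D_eq with (0 * f x + k * l); [ring|]. apply (D_mult (fun _ => k) f); [apply D_const|auto]. Qed.

Section Vsec.
Variable n : nat.
Hypothesis Hn : (2 <= n)%nat.
Variables lam Cv : R.
Hypothesis Hlam : 0 < lam.
Hypothesis HCv : 0 < Cv.

Definition nv := nu n.
Definition aa := INR n - 3 / 2.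
Definition pr r := Rpower r aa.
Definition Vf r := Cv * pr r * G0 nv (lam * r).
Definition V1 r := Cv * aa * (pr r * / r) * G0 nv (lam * r) + Cv * lam * pr r * G1 nv (lam * r).
Definition V2 r := Cv * (aa * (aa - 1) * pr r * / (r * r) * G0 nv (lam * r)
   + 2 * aa * lam * pr r * / r * G1 nv (lam * r) + lam * lam * pr r * G2 nv (lam * r)).

Lemma Qpos : 0 < 36 * INR n ^ 2 - 96 * INR n + 61.
Proof. assert (H := INRn2 n Hn). nra. Qed.

Lemma nv_pos : 0 < nv.
Proof. unfold nv, nu. assert (H := Qpos). apply Rdiv_lt_0_compat; [apply sqrt_lt_R0; auto| lra]. Qed.

Lemma nv2 : nv * nv = (36 * INR n ^ 2 - 96 * INR n + 61) / 36.
Proof. unfold nv, nu. assert (H := Qpos).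
  replace (sqrt (36 * INR n ^ 2 - 96 * INR n + 61) / 6 * (sqrt (36 * INR n ^ 2 - 96 * INR n + 61) / 6))
   with (sqrt (36 * INR n ^ 2 - 96 * INR n + 61) * sqrt (36 * INR n ^ 2 - 96 * INR n + 61) / 36) by field.
  rewrite sqrt_sqrt; lra. Qed.

Lemma aa_pos : 0 < aa.
Proof. unfold aa. generalize (INRn2 n Hn); lra. Qed.

Lemma D_G0l r : 0 < r -> derivable_pt_lim (fun t => G0 nv (lam * t)) r (G1 nv (lam * r) * lam).
Proof. intros. apply (D_comp (fun t => lam * t) (G0 nv)). apply D_lin. apply D_G0. apply nv_pos. nra. Qed.
Lemma D_G1l r : 0 < r -> derivable_pt_lim (fun t => G1 nv (lam * t)) r (G2 nv (lam * r) * lam).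
Proof. intros. apply (D_comp (fun t => lam * t) (G1 nv)). apply D_lin. apply D_G1. apply nv_pos. nra. Qed.

Lemma D_prr r : 0 < r -> derivable_pt_lim (fun t => pr t * / t) r ((aa - 1) * pr r * / (r * r)).
Proof.
  intros Hr. apply D_eq with (aa * pr r * / r * / r + pr r * (- / (r * r))).
  { field. lra. }
  apply (D_mult pr (fun t => / t)). apply D_rp; auto. apply D_invx; lra.
Qed.

Lemma D_Vf r : 0 < r -> derivable_pt_lim Vf r (V1 r).
Proof.
  intros Hr. unfold Vf, V1.
  apply D_eq with (Cv * (aa * pr r * / r) * G0 nv (lam * r) + Cv * pr r * (G1 nv (lam * r) * lam)).
  { field. lra. }
  apply (D_mult (fun t => Cv * pr t) (fun t => G0 nv (lam * t))).
  apply D_scal, D_rp; auto. apply D_G0l; auto.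
Qed.

Lemma D_V1 r : 0 < r -> derivable_pt_lim V1 r (V2 r).
Proof.
  intros Hr. unfold V1, V2.
  apply D_eq with ((Cv * aa * ((aa - 1) * pr r * / (r * r)) * G0 nv (lam * r) + Cv * aa * (pr r * / r) * (G1 nv (lam * r) * lam))
     + (Cv * lam * (aa * pr r * / r) * G1 nv (lam * r) + Cv * lam * pr r * (G2 nv (lam * r) * lam))).
  { field. lra. }
  apply (D_plus (fun t => Cv * aa * (pr t * / t) * G0 nv (lam * t)) (fun t => Cv * lam * pr t * G1 nv (lam * t))).
  - apply (D_mult (fun t => Cv * aa * (pr t * / t)) (fun t => G0 nv (lam * t))).
    apply D_scal, D_prr; auto. apply D_G0l; auto.
  - apply (D_mult (fun t => Cv * lam * pr t) (fun t => G1 nv (lam * t))).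
    apply D_scal, D_rp; auto. apply D_G1l; auto.
Qed.

Lemma V_ode r : 0 < r ->
  V2 r + (4 - 2 * INR n) / r * V1 r - (3 * INR n - 5) / (9 * (r * r)) * Vf r + lam * lam * Vf r = 0.
Proof.
  intros Hr. assert (E := G_ode nv nv_pos (lam * r) ltac:(nra)).
  assert (N := nv2).
  unfold V1, V2, Vf.
  set (g0 := G0 nv (lam * r)) in *. set (g1 := G1 nv (lam * r)) in *. set (g2 := G2 nv (lam * r)) in *.
  set (p := pr r).
  assert (X : Cv * (aa * (aa - 1) * p * / (r * r) * g0 + 2 * aa * lam * p * / r * g1 + lam * lam * p * g2) +
     (4 - 2 * INR n) / r * (Cv * aa * (p * / r) * g0 + Cv * lam * p * g1) -
     (3 * INR n - 5) / (9 * (r * r)) * (Cv * p * g0) + lam * lam * (Cv * p * g0)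
     = Cv * p / (r * r) * (lam * r * (lam * r) * g2 + lam * r * g1 + (lam * r * (lam * r) - nv * nv) * g0)
       + Cv * p / (r * r) * g0 * (nv * nv - (36 * INR n ^ 2 - 96 * INR n + 61) / 36)).
  { unfold aa. field. lra. }
  rewrite X, E, N. ring.
Qed.

Lemma V_pos x1 : 0 < x1 ->
  (forall y, 0 < y < x1 -> exists d, d <> 0 /\ derivable_pt_lim (BesselJ nv) y d) ->
  forall r, 0 < r -> lam * r < x1 -> 0 < Vf r /\ 0 < V1 r.
Proof.
  intros Hx1 Hd r Hr Hrx.
  destruct (bessel_sign nv nv_pos x1 Hx1 Hd (lam * r) ltac:(split; nra)) as [H1 H0].
  assert (Hp : 0 < pr r) by apply Rpower_pos.
  assert (Ha := aa_pos).
  unfold Vf, V1. revert H1 H0. generalize (G0 nv (lam * r)) (G1 nv (lam * r)). intros g0 g1 H1 H0.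
  assert (0 < / r) by (apply Rinv_0_lt_compat; auto).
  split.
  - repeat apply Rmult_lt_0_compat; auto.
  - apply Rplus_lt_0_compat; repeat apply Rmult_lt_0_compat; auto.
Qed.

Lemma vfun_eq r t : 0 < r -> vfun n lam Cv r t = exp (- lam ^ 2 * t) * Vf r.
Proof.
  intros Hr. unfold vfun, Vf, pr, aa. rewrite pw_pos by auto. rewrite BJ_G0. fold nv. ring.
  apply nv_pos. nra.
Qed.

End Vsec.

End GE.
Import GE.

Module GF.
Open Scope R_scope.

Lemma subsol_alg (nn r U A U2 th B V V2 lam : R) : 0 < r -> U < 0 -> A < 0 -> 0 < th ->
  0 <= B -> 0 <= V ->
  U2 + (nn - 1) / r * A + U * A ^ 3 = 0 ->
  U * A ^ 2 = - (3 * nn - 5) / (3 * r) ->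
  A ^ 3 = - (3 * nn - 5) / (9 * (r * r)) ->
  V2 + (4 - 2 * nn) / r * B - (3 * nn - 5) / (9 * (r * r)) * V + lam * lam * V = 0 ->
  (U2 - th * V2) + (nn - 1) / r * (A - th * B) + (U - th * V) * (A - th * B) ^ 3
     - lam ^ 2 * th * V >= 0.
Proof.
  intros Hr HU HA Hth HB HV h1 h2 h3 h4.
  assert (X : (U2 - th * V2) + (nn - 1) / r * (A - th * B) + (U - th * V) * (A - th * B) ^ 3
     - lam ^ 2 * th * V =
     (3 * ((U * A) * (th*B * (th*B))) + (- U) * (th*B * (th*B) * (th*B)) + 3 * (th*V * (A * A) * (th*B)) + 3 * (th*V * (- A) * (th*B * (th*B)))
       + th*V * (th*B * (th*B) * (th*B)))
     + (U2 + (nn - 1) / r * A + U * A ^ 3)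
     - th * (V2 + (4 - 2 * nn) / r * B - (3 * nn - 5) / (9 * (r * r)) * V + lam * lam * V)
     - 3 * (th*B) * (U * A ^ 2 - - (3 * nn - 5) / (3 * r))
     - th*V * (A ^ 3 - - (3 * nn - 5) / (9 * (r * r)))).
  { field. lra. }
  rewrite X, h1, h4, h2, h3.
  set (b := th * B). set (c := th * V).
  assert (Hb : 0 <= b) by (unfold b; apply Rmult_le_pos; lra).
  assert (Hc : 0 <= c) by (unfold c; apply Rmult_le_pos; lra).
  clearbody b c.
  assert (0 <= U * A) by nra.
  assert (0 <= (U * A) * (b * b)) by (apply Rmult_le_pos; [lra| apply Rmult_le_pos; lra]).
  assert (0 <= (- U) * (b * b * b)) by (apply Rmult_le_pos; [lra| repeat apply Rmult_le_pos; lra]).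
  assert (0 <= c * (A * A) * b) by (apply Rmult_le_pos; [apply Rmult_le_pos; [lra|nra]|lra]).
  assert (0 <= c * (- A) * (b * b)) by (apply Rmult_le_pos; [apply Rmult_le_pos; lra|apply Rmult_le_pos; lra]).
  assert (0 <= c * (b * b * b)) by (apply Rmult_le_pos; [lra| repeat apply Rmult_le_pos; lra]).
  lra.
Qed.

Lemma pw_nonneg x a : 0 <= pw x a.
Proof. unfold pw; destruct Rlt_dec; [left; unfold Rpower; apply exp_pos| lra]. Qed.

Lemma pw_small a e : 0 < a -> 0 < e -> exists d, 0 < d /\ forall x, 0 <= x < d -> pw x a < e.
Proof.
  intros Ha He. exists (Rpower e (/ a)). split; [apply Rpower_pos|].
  intros x [Hx0 Hx]. unfold pw. destruct Rlt_dec; [|lra].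
  apply Rlt_le_trans with (Rpower (Rpower e (/ a)) a).
  apply Rlt_Rpower_l; auto.
  rewrite Rpower_mult. replace (/ a * a) with 1 by (field; lra). rewrite Rpower_1; lra.
Qed.

Lemma holder_unif a b T beta (u : R -> R -> R) : 0 < beta ->
  holder2 (fun r t => a <= r <= b /\ 0 <= t) beta u -> unif2 a b 0 T u.
Proof.
  intros Hb [K HK] e He.
  set (e' := e / (4 * (Rabs K + 1))).
  assert (He' : 0 < e') by (unfold e'; apply Rdiv_lt_0_compat; [lra| generalize (Rabs_pos K); lra]).
  destruct (pw_small beta e' Hb He') as [d1 [Hd1 H1]].
  destruct (pw_small (beta / 2) e' ltac:(lra) He') as [d2 [Hd2 H2]].
  exists (Rmin d1 d2); split; [apply Rmin_pos; auto|]. intros r s t tau Hr Hs Ht Htau Hrs Htt.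
  assert (A1 := Rmin_l d1 d2). assert (A2 := Rmin_r d1 d2).
  assert (P1 := H1 (Rabs (r - s)) ltac:(split; [apply Rabs_pos|lra])).
  assert (P2 := H2 (Rabs (t - tau)) ltac:(split; [apply Rabs_pos|lra])).
  assert (Q1 := pw_nonneg (Rabs (r - s)) beta). assert (Q2 := pw_nonneg (Rabs (t - tau)) (beta / 2)).
  assert (HH := HK r t s tau ltac:(split; lra) ltac:(split; lra)).
  eapply Rle_lt_trans; [exact HH|].
  apply Rle_lt_trans with ((Rabs K + 1) * (2 * e')).
  { apply Rle_trans with (Rabs K * (pw (Rabs (r - s)) beta + pw (Rabs (t - tau)) (beta / 2))).
    apply Rmult_le_compat_r; [lra|apply Rle_abs].
    apply Rmult_le_compat; try lra. apply Rabs_pos. }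
  unfold e'. replace ((Rabs K + 1) * (2 * (e / (4 * (Rabs K + 1))))) with (e / 2).
  lra. field. generalize (Rabs_pos K); lra.
Qed.

End GF.
Import GF.

Open Scope R_scope.

Theorem mainTheorem13
  (n : nat) (R0 : R)
  (Hn : (2 <= n)%nat)
  (HR0 : 0 < R0)
  (HR1 : R0 < sqrt (3 / 8 * (3 * INR n - 5) * (2 * INR n - 3) ^ 3))
  (* u0 (radial profile on (0,R0]) with first and second radial derivatives *)
  (u0 u0r u0rr : R -> R)
  (C1a : forall r, 0 < r < R0 -> derivable_pt_lim u0 r (u0r r))
  (C1b : forall r, 0 < r < R0 -> derivable_pt_lim u0r r (u0rr r))
  (C1c : cont_on (fun r => 0 < r <= R0) u0)
  (C1d : cont_on (fun r => 0 < r <= R0) u0r)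
  (C1e : cont_on (fun r => 0 < r <= R0) u0rr)
  (C3 : forall r, 0 < r <= R0 -> ustar n r >= u0 r)
  (C4 : exists M d, 0 < d /\ forall r, 0 < r < d ->
          Rabs (pw r (3 / 2 - INR n - nu n) * (ustar n r - u0 r)) <= M)
  (C5 : u0 R0 = ustar n R0)
  (C6 : exists C, 0 < C /\ forall r, 0 < r < R0 ->
          0 >= u0r r /\ u0r r >= - C * pw r (- (2 / 3)))
  (* lam, C with lam * R0 < x1, x1 = first positive root of J_nu' *)
  (x1 lam Cv : R)
  (Hx1a : 0 < x1)
  (Hx1b : derivable_pt_lim (BesselJ (nu n)) x1 0)
  (Hx1c : forall y, 0 < y < x1 ->
          exists d, d <> 0 /\ derivable_pt_lim (BesselJ (nu n)) y d)
  (Hlam : 0 < lam) (HlamR : lam * R0 < x1)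
  (HCv : 0 < Cv)
  (Hv0 : forall r, 0 < r < R0 -> u0 r >= ustar n r - vfun n lam Cv r 0)
  (* epsilon and the approximate initial datum u0e *)
  (eps : R) (Heps : 0 < eps < R0)
  (u0e u0er u0err : R -> R)
  (Hu0e1 : forall r, eps < r < R0 -> derivable_pt_lim u0e r (u0er r))
  (Hu0e2 : forall r, eps < r < R0 -> derivable_pt_lim u0er r (u0err r))
  (Hu0e3 : cont_on (fun r => eps <= r <= R0) u0e)
  (Hu0e4 : cont_on (fun r => eps <= r <= R0) u0er)
  (Hu0e5 : cont_on (fun r => eps <= r <= R0) u0err)
  (Hu0e6 : u0e eps = ustar n eps - vfun n lam Cv eps 0)
  (Hu0e7 : forall r, eps < r < R0 -> u0r r <= u0er r /\ u0er r <= 0)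
  (Hu0e8 : forall r, eps <= r <= R0 ->
           ustar n r >= u0e r /\ u0e r >= ustar n r - vfun n lam Cv r 0)
  (Hu0e9 : forall r, eps < r <= R0 ->
           u0 r < ustar n eps - vfun n lam Cv eps 0 - eps -> u0e r = u0 r)
  (* the constant c*_eps *)
  (cst : R)
  (Hc1 : cst > 1)
  (Hc2 : forall r d, eps <= r <= R0 -> derivable_pt_lim (ustar n) r d -> cst > Rabs d)
  (Hc3 : forall r d, eps <= r <= R0 ->
         derivable_pt_lim (fun s => ustar n s - vfun n lam Cv s 0) r d -> cst > Rabs d)
  (Hc4 : forall r, eps <= r <= R0 -> cst > Rabs (u0er r))
  (Hc5 : - vfun n lam Cv eps 0 + (INR n - 1) / eps * cst + ustar n eps * cst ^ 3 <= 0)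
  (* the nonlinearity f_eps *)
  (f : R -> R)
  (Hf1 : smooth f)
  (Hf2 : exists M, forall s, Rabs s > M -> f s = 0)
  (Hf3 : forall s, Rabs s <= cst -> f s = s ^ 3)
  (Hf4 : forall s, s < 0 -> f s <= 0)
  (* the approximate solution u_eps (radial profile) and its derivatives *)
  (u ur urr ut : R -> R -> R)
  (beta : R) (Hbeta : 0 < beta < 1)
  (Hu1 : holder2 (fun r t => eps <= r <= R0 /\ 0 <= t) beta u)
  (Hu2 : forall r t, eps < r < R0 -> 0 < t ->
         derivable_pt_lim (fun s => u s t) r (ur r t) /\
         derivable_pt_lim (fun s => ur s t) r (urr r t) /\
         derivable_pt_lim (fun s => u r s) t (ut r t))
  (Hu3 : cont_on2 (fun r t => eps < r < R0 /\ 0 < t) ur)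
  (Hu4 : forall a b t1 t2, eps < a -> b < R0 -> 0 < t1 ->
         holder2 (fun r t => a <= r <= b /\ t1 <= t <= t2) beta urr /\
         holder2 (fun r t => a <= r <= b /\ t1 <= t <= t2) beta ut)
  (Hu5 : forall T, exists K, forall r t, eps < r < R0 -> 0 < t <= T ->
         Rabs (ur r t) <= K)
  (Hpde : forall r t, eps < r < R0 -> 0 < t ->
          ut r t = urr r t + (INR n - 1) / r * ur r t + u r t * f (ur r t))
  (Hbc1 : forall t, 0 < t -> u eps t = ustar n eps - vfun n lam Cv eps t)
  (Hbc2 : forall t, 0 < t -> u R0 t = ustar n R0)
  (Hic : forall r, eps <= r <= R0 -> u r 0 = u0e r) :
  forall r t, eps < r < R0 -> 0 < t ->
    ustar n r >= u r t /\ u r t >= ustar n r - vfun n lam Cv r t.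
Proof.
  intros r t Hr Ht.
  assert (Hnv := nv_pos n Hn).
  assert (Hpos : forall s, 0 < s -> lam * s < x1 -> 0 < Vf n lam Cv s /\ 0 < V1 n lam Cv s).
  { intros s Hs Hs1. apply (V_pos n Hn lam Cv Hlam HCv x1 Hx1a Hx1c s Hs Hs1). }
  assert (Hin : forall s, eps <= s <= R0 -> 0 < s /\ lam * s < x1).
  { intros s Hs. split; [lra|]. apply Rle_lt_trans with (lam * R0); auto.
    apply Rmult_le_compat_l; lra. }
  set (E := fun t => exp (- lam ^ 2 * t)).
  assert (HE : forall t, 0 < E t) by (intros; apply exp_pos).
  assert (HE1 : forall t, 0 <= t -> E t <= 1).
  { intros t0 Ht0. unfold E. rewrite <- exp_0. destruct (Req_dec t0 0) as [->|].
    rewrite Rmult_0_r; lra. left. apply exp_increasing.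
    assert (0 < lam ^ 2 * t0) by (apply Rmult_lt_0_compat; [apply pow_lt|]; lra). lra. }
  assert (Hvf : forall s t, 0 < s -> vfun n lam Cv s t = E t * Vf n lam Cv s).
  { intros; apply vfun_eq; auto. }
  assert (HE0 : E 0 = 1) by (unfold E; rewrite Rmult_0_r; apply exp_0).
  set (K := cst ^ 3).
  assert (HK : 0 <= K) by (unfold K; apply pow_le; lra).
  assert (Dv : forall s t, 0 < s -> derivable_pt_lim (fun x => vfun n lam Cv x t) s (E t * V1 n lam Cv s)).
  { intros s t0 Hs. apply (D_ext_loc (fun x => E t0 * Vf n lam Cv x) _ s _ 0); auto.
    intros; symmetry; auto. apply D_scal, (D_Vf n Hn lam Cv Hlam); auto. }
  assert (Dvt : forall s t, 0 < s -> derivable_pt_lim (fun y => vfun n lam Cv s y) t (- lam ^ 2 * E t * Vf n lam Cv s)).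
  { intros s t0 Hs. apply (D_ext (fun y => E y * Vf n lam Cv s)). { intros; symmetry; auto. }
    apply D_eq with ((- lam ^ 2 * exp (- lam ^ 2 * t0)) * Vf n lam Cv s + E t0 * 0); [unfold E; ring|].
    apply (D_mult E (fun _ => Vf n lam Cv s)). unfold E. apply D_exp_lin. apply D_const. }
  assert (HcA : forall s, eps < s < R0 -> Rabs (U1 n s) < cst).
  { intros s Hs. apply Rgt_lt. apply (Hc2 s); [lra|]. apply D_us; lra. }
  assert (HcAB : forall s, eps < s < R0 -> Rabs (U1 n s - V1 n lam Cv s) < cst).
  { intros s Hs. apply Rgt_lt. apply (Hc3 s); [lra|].
    apply (D_minus (ustar n) (fun x => vfun n lam Cv x 0)). apply D_us; lra.
    apply D_eq with (E 0 * V1 n lam Cv s); [rewrite HE0; ring|]. apply Dv; lra. }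
  assert (Cus : forall s, eps <= s <= R0 -> continuity_pt (ustar n) s).
  { intros s Hs. apply derivable_continuous_pt. exists (U1 n s). apply D_us; lra. }
  assert (Uv : forall T, 0 < T -> unif2 eps R0 0 T (fun s y => vfun n lam Cv s y)).
  { intros T HT. apply unif2_ext with (fun s y => E y * Vf n lam Cv s).
    - apply unif2_mult; try lra.
      + apply unif2_t. intros. apply derivable_continuous_pt. exists (- lam ^ 2 * exp (- lam ^ 2 * x)).
        unfold E. apply D_exp_lin.
      + apply unif2_r. intros. apply derivable_continuous_pt. exists (V1 n lam Cv x). apply (D_Vf n Hn lam Cv Hlam); lra.
    - intros s y Hs Hy. symmetry; apply Hvf; lra. }
  assert (Uu : forall T, unif2 eps R0 0 T u).
  { intros T. apply (holder_unif eps R0 T beta u); [lra| exact Hu1]. }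
  assert (Uus : forall T, unif2 eps R0 0 T (fun s y => ustar n s)).
  { intros T. apply unif2_r. auto. }
  split.
  -
    assert (M := minprin (fun s y => ustar n s - u s y) (fun s y => U1 n s - ur s y)
      (fun s y => U2 n s - urr s y) (fun s y => 0 - ut s y) eps R0 t K ltac:(lra) Ht HK).
    assert (H := M ltac:(apply unif2_plus; [apply Uus| apply unif2_opp, Uu])).
    clear M.
    assert (H' := H ltac:(intros s y Hs Hy; destruct (Hu2 s y Hs ltac:(lra)) as [D1 [D2 D3]]; split; [|split];
          [apply (D_minus (ustar n) (fun x => u x y)); [apply D_us; lra| exact D1]
          |apply (D_minus (U1 n) (fun x => ur x y)); [apply D_U1; lra| exact D2]
          |apply (D_minus (fun _ => ustar n s) (fun x => u s x)); [apply D_const| exact D3]])).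
    clear H.
    assert (H := H').
    clear H'.
    assert (Hfin : forall s y, eps < s < R0 -> 0 < y <= t -> U1 n s - ur s y = 0 -> ustar n s - u s y < 0 ->
              0 - ut s y >= U2 n s - urr s y + K * (ustar n s - u s y)).
    { intros s y Hs Hy Hz Hw.
      assert (Eur : ur s y = U1 n s) by lra.
      assert (Hp := Hpde s y Hs ltac:(lra)). rewrite Eur in Hp.
      rewrite (Hf3 (U1 n s)) in Hp by (left; apply HcA; auto).
      assert (St := stat n Hn s ltac:(lra)).
      rewrite <- (ustar_eq n s) in St by lra.
      assert (HA := U1_neg n s ltac:(lra)).
      assert (HA3 : U1 n s ^ 3 < 0) by (simpl; assert (0 < U1 n s * U1 n s) by nra; nra).
      assert (Hprod : 0 <= (u s y - ustar n s) * (K - U1 n s ^ 3)) by (apply Rmult_le_pos; lra).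
      rewrite Hp.
      assert (X : 0 - (urr s y + (INR n - 1) / s * U1 n s + u s y * U1 n s ^ 3) -
                  (U2 n s - urr s y + K * (ustar n s - u s y)) =
                  (u s y - ustar n s) * (K - U1 n s ^ 3) -
                  (U2 n s + (INR n - 1) / s * U1 n s + ustar n s * U1 n s ^ 3)) by ring.
      lra. }
    assert (H2 := H Hfin). clear H.
    assert (Hb : forall y, 0 <= y <= t -> ustar n eps - u eps y >= 0 /\ ustar n R0 - u R0 y >= 0).
    { intros y Hy. destruct (Req_dec y 0) as [->|Hy0].
      - rewrite !Hic by lra. destruct (Hu0e8 eps ltac:(lra)). destruct (Hu0e8 R0 ltac:(lra)). lra.
      - rewrite Hbc1, Hbc2 by lra. rewrite Hvf by lra.
        destruct (Hpos eps ltac:(lra) ltac:(apply Hin; lra)). assert (Hy' := HE y).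
        split; [|lra]. assert (0 <= E y * Vf n lam Cv eps) by (apply Rmult_le_pos; lra). lra. }
    assert (H3 := H2 Hb). clear H2.
    assert (H4 := H3 ltac:(intros s Hs; cbv beta; rewrite Hic by lra; destruct (Hu0e8 s Hs); lra)).
    assert (H5 := H4 r t ltac:(lra) ltac:(lra)). cbv beta in H5. lra.
  -
    set (z := fun s y => ustar n s - vfun n lam Cv s y).
    assert (M := minprin (fun s y => u s y - z s y)
      (fun s y => ur s y - (U1 n s - E y * V1 n lam Cv s))
      (fun s y => urr s y - (U2 n s - E y * V2 n lam Cv s))
      (fun s y => ut s y - lam ^ 2 * E y * Vf n lam Cv s) eps R0 t K ltac:(lra) Ht HK).
    assert (H := M ltac:(apply unif2_plus; [apply Uu| apply unif2_opp; unfold z; apply unif2_plus; [apply Uus|apply unif2_opp, Uv; lra]])).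
    clear M.
    assert (H' := H ltac:(intros s y Hs Hy; destruct (Hu2 s y Hs ltac:(lra)) as [D1 [D2 D3]]; split; [|split];
          [apply (D_minus (fun x => u x y) (fun x => z x y)); [exact D1|];
             apply (D_minus (ustar n) (fun x => vfun n lam Cv x y)); [apply D_us; lra| apply Dv; lra]
          |apply (D_minus (fun x => ur x y) (fun x => U1 n x - E y * V1 n lam Cv x)); [exact D2|];
             apply (D_minus (U1 n) (fun x => E y * V1 n lam Cv x)); [apply D_U1; lra| apply D_scal, (D_V1 n Hn lam Cv Hlam); lra]
          |apply D_eq with (ut s y - (0 - (- lam ^ 2 * E y * Vf n lam Cv s))); [ring|];
             apply (D_minus (fun x => u s x) (fun x => z s x)); [exact D3|];
             apply (D_minus (fun _ => ustar n s) (fun x => vfun n lam Cv s x)); [apply D_const| apply Dvt; lra]])).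
    clear H. assert (H := H'). clear H'.
    assert (Hfin : forall s y, eps < s < R0 -> 0 < y <= t ->
              ur s y - (U1 n s - E y * V1 n lam Cv s) = 0 -> u s y - z s y < 0 ->
              ut s y - lam ^ 2 * E y * Vf n lam Cv s >=
              urr s y - (U2 n s - E y * V2 n lam Cv s) + K * (u s y - z s y)).
    { intros s y Hs Hy Hz Hw.
      set (zr := U1 n s - E y * V1 n lam Cv s).
      assert (Eur : ur s y = zr) by (unfold zr; lra).
      destruct (Hpos s ltac:(lra) ltac:(apply Hin; lra)) as [PV PV1].
      assert (Hey := HE y). assert (Hey1 := HE1 y ltac:(lra)).
      assert (Hzr : Rabs zr <= cst).
      { assert (A1 := HcA s Hs). assert (A2 := HcAB s Hs).
        assert (Bb : 0 <= E y * V1 n lam Cv s <= V1 n lam Cv s).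
        { split. apply Rmult_le_pos; lra.
          rewrite <- (Rmult_1_l (V1 n lam Cv s)) at 2. apply Rmult_le_compat_r; lra. }
        unfold zr. revert A1 A2 Bb. generalize (E y * V1 n lam Cv s). intros b A1 A2 Bb.
        revert A1 A2; unfold Rabs; repeat destruct Rcase_abs; intros; lra. }
      assert (Hp := Hpde s y Hs ltac:(lra)). rewrite Eur in Hp.
      rewrite (Hf3 zr Hzr) in Hp.
      assert (Hz3 : zr ^ 3 <= K).
      { unfold K. revert Hzr. unfold Rabs. destruct Rcase_abs; intros.
        - assert (zr ^ 3 < 0) by (simpl; assert (0 < zr * zr) by nra; nra).
          assert (0 <= cst ^ 3) by (apply pow_le; lra). lra.
        - simpl. assert (0 <= zr) by lra.
          assert (zr * zr <= cst * cst) by (apply Rmult_le_compat; lra).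
          assert (zr * (zr * zr) <= cst * (cst * cst)) by (apply Rmult_le_compat; try lra; nra).
          lra. }
      assert (Sub := subsol_alg (INR n) s (- alpha n * sr s) (U1 n s) (U2 n s) (E y) (V1 n lam Cv s)
          (Vf n lam Cv s) (V2 n lam Cv s) lam ltac:(lra)
          ltac:(assert (Ha := alpha_pos n); assert (Hsr := sr_pos s); nra)
          ltac:(apply U1_neg; lra) (Hey) ltac:(lra) ltac:(lra)
          (stat n Hn s ltac:(lra)) (UA2 n Hn s ltac:(lra)) (A3 n Hn s ltac:(lra))
          (V_ode n Hn lam Cv Hlam s ltac:(lra))).
      rewrite <- (ustar_eq n s) in Sub by lra.
      assert (Zs : z s y = ustar n s - E y * Vf n lam Cv s) by (unfold z; rewrite Hvf by lra; auto).
      rewrite Zs in Hw |- *. fold zr in Sub.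
      assert (Hprod : 0 <= (u s y - (ustar n s - E y * Vf n lam Cv s)) * (zr ^ 3 - K)).
      { replace ((u s y - (ustar n s - E y * Vf n lam Cv s)) * (zr ^ 3 - K)) with
          ((- (u s y - (ustar n s - E y * Vf n lam Cv s))) * (- (zr ^ 3 - K))) by ring.
        apply Rmult_le_pos; lra. }
      rewrite Hp.
      assert (X : urr s y + (INR n - 1) / s * zr + u s y * zr ^ 3 - lam ^ 2 * E y * Vf n lam Cv s -
           (urr s y - (U2 n s - E y * V2 n lam Cv s) + K * (u s y - (ustar n s - E y * Vf n lam Cv s)))
           = (U2 n s - E y * V2 n lam Cv s + (INR n - 1) / s * zr +
               (ustar n s - E y * Vf n lam Cv s) * zr ^ 3 - lam ^ 2 * E y * Vf n lam Cv s)
             + (u s y - (ustar n s - E y * Vf n lam Cv s)) * (zr ^ 3 - K)).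
      { ring. }
      unfold zr in X, Sub, Hprod |- *. lra. }
    assert (H2 := H Hfin). clear H.
    assert (Hb : forall y, 0 <= y <= t -> u eps y - z eps y >= 0 /\ u R0 y - z R0 y >= 0).
    { intros y Hy. unfold z. destruct (Req_dec y 0) as [->|Hy0].
      - rewrite !Hic by lra. destruct (Hu0e8 eps ltac:(lra)). destruct (Hu0e8 R0 ltac:(lra)). lra.
      - rewrite Hbc1, Hbc2 by lra. rewrite (Hvf R0) by lra.
        destruct (Hpos R0 ltac:(lra) ltac:(apply Hin; lra)). assert (Hy' := HE y).
        split; [lra|]. assert (0 <= E y * Vf n lam Cv R0) by (apply Rmult_le_pos; lra). lra. }
    assert (H3 := H2 Hb). clear H2.
    assert (H4 := H3 ltac:(intros s Hs; cbv beta; unfold z; rewrite Hic by lra; destruct (Hu0e8 s Hs); lra)).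
    assert (H5 := H4 r t ltac:(lra) ltac:(lra)). cbv beta in H5. unfold z in H5. lra.
Qed.
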